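(* Let $h:\mathbb{R}\to\mathbb{R}$ be continuous and let $u_1,u_2$ be linearly independent real solutions of $u''(x)+h(x)u(x)=0$. (i) For any matrix in $GL(2,\mathbb{R})$, the pair of solutions obtained by applying it to $(u_1,u_2)$ is again linearly independent, so the action of $GL(2,\mathbb{R})$ on the span of the solutions induces (via the map of the context) a local isomorphism of the Poincaré upper half plane $\mathbb{H}$. (ii) For real constants $A,B$, not both zero, let $u(x)=Au_1(x)+Bu_2(x)$ and \[ Y(x,\varPhi)=\frac{\varPhi}{\varPhi^2[u(x)]^2+[u'(x)]^2}. \] Then $Y$ (depending on the two parameters $A,B$) is a complete integral of the partial differential equation \[ \left(\frac{\varPhi}{h(x)-\varPhi^{2}}\frac{\partial Y}{\partial x}(x,\varPhi)\right)^{2}+\left(\varPhi\frac{\partial Y}{\partial\varPhi}(x,\varPhi)\right)^{2}=Y^2(x,\varPhi) \] on $\{(x,\varPhi)\mid\varPhi>0,\ \varPhi^2\neq h(x)\}$.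
   Context: For linearly independent solutions $v_1,v_2$ of $u''+hu=0$ with Wronskian $W=v_1'v_2-v_1v_2'$, the map $(x,\varPhi)\mapsto(X,Y)$, $X=X_0\pm W^{-1}\frac{\varPhi^2v_1v_2+v_1'v_2'}{\varPhi^2v_1^2+(v_1')^2}$, $Y=\frac{\varPhi}{\varPhi^2v_1^2+(v_1')^2}$, is a local diffeomorphism pulling back $g_{\mathbb{H}}=(dX^2+dY^2)/Y^2$ on $\{Y>0\}$ to $g_h=\left[(h(x)-\varPhi^2)^2dx^2+d\varPhi^2\right]/\varPhi^2$ on $\{\varPhi>0,\ \varPhi^2\neq h(x)\}$. *)

(* Defs.v *)
From Stdlib Require Import Reals.
From Coquelicot Require Import Coquelicot.
Open Scope R_scope.

Definition is_sol (h u : R -> R) : Prop :=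
  forall x, ex_derive u x /\ is_derive (Derive u) x (- h x * u x).

Definition lin_indep (v1 v2 : R -> R) : Prop :=
  forall a b : R, (forall x, a * v1 x + b * v2 x = 0) -> a = 0 /\ b = 0.

Definition Dom (h : R -> R) (x Phi : R) : Prop := 0 < Phi /\ Phi ^ 2 <> h x.

Definition pdx (f : R -> R -> R) (x y : R) : R := Derive (fun t => f t y) x.
Definition pdy (f : R -> R -> R) (x y : R) : R := Derive (fun s => f x s) y.

Definition C1_on (V : R * R -> Prop) (f : R -> R -> R) : Prop :=
  forall p : R * R, V p ->
    ex_derive (fun t => f t (snd p)) (fst p) /\
    ex_derive (fun s => f (fst p) s) (snd p) /\
    continuous (fun q : R * R => pdx f (fst q) (snd q)) p /\
    continuous (fun q : R * R => pdy f (fst q) (snd q)) p.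

Definition local_diffeo (U : R -> R -> Prop) (X Y : R -> R -> R) : Prop :=
  forall x0 y0, U x0 y0 ->
  exists (V W : R * R -> Prop) (G1 G2 : R -> R -> R),
    open V /\ open W /\ V (x0, y0) /\
    (forall p : R * R, V p -> U (fst p) (snd p)) /\
    (forall p : R * R, V p ->
        W (X (fst p) (snd p), Y (fst p) (snd p)) /\
        G1 (X (fst p) (snd p)) (Y (fst p) (snd p)) = fst p /\
        G2 (X (fst p) (snd p)) (Y (fst p) (snd p)) = snd p) /\
    (forall w : R * R, W w ->
        V (G1 (fst w) (snd w), G2 (fst w) (snd w)) /\
        X (G1 (fst w) (snd w)) (G2 (fst w) (snd w)) = fst w /\
        Y (G1 (fst w) (snd w)) (G2 (fst w) (snd w)) = snd w) /\
    C1_on V X /\ C1_on V Y /\ C1_on W G1 /\ C1_on W G2.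

(* The pull-back of g_H = (dX^2+dY^2)/Y^2 by (X,Y) equals
   g_h = [(h(x)-Phi^2)^2 dx^2 + dPhi^2]/Phi^2 at every point of U,
   and (X,Y) lands in the upper half plane {Y > 0}. *)
Definition pullback_gH_is_gh (h : R -> R) (U : R -> R -> Prop) (X Y : R -> R -> R) : Prop :=
  forall x Phi, U x Phi ->
    0 < Y x Phi /\
    (pdx X x Phi ^ 2 + pdx Y x Phi ^ 2) / (Y x Phi) ^ 2 = (h x - Phi ^ 2) ^ 2 / Phi ^ 2 /\
    (pdx X x Phi * pdy X x Phi + pdx Y x Phi * pdy Y x Phi) / (Y x Phi) ^ 2 = 0 /\
    (pdy X x Phi ^ 2 + pdy Y x Phi ^ 2) / (Y x Phi) ^ 2 = 1 / Phi ^ 2.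

Definition wronsk (v1 v2 : R -> R) (x : R) : R :=
  Derive v1 x * v2 x - v1 x * Derive v2 x.

(* The map of the context; s = +1 or -1 encodes the sign choice. *)
Definition ctxX (v1 v2 : R -> R) (X0 s : R) (x Phi : R) : R :=
  X0 + s * / wronsk v1 v2 x *
    ((Phi ^ 2 * v1 x * v2 x + Derive v1 x * Derive v2 x)
       / (Phi ^ 2 * (v1 x) ^ 2 + (Derive v1 x) ^ 2)).

Definition ctxY (v1 : R -> R) (x Phi : R) : R :=
  Phi / (Phi ^ 2 * (v1 x) ^ 2 + (Derive v1 x) ^ 2).

Definition solves_PDE (h : R -> R) (U : R -> R -> Prop) (Y : R -> R -> R) : Prop :=
  forall x Phi, U x Phi ->
    ex_derive (fun t => Y t Phi) x /\ ex_derive (fun s => Y x s) Phi /\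
    (Phi / (h x - Phi ^ 2) * pdx Y x Phi) ^ 2 + (Phi * pdy Y x Phi) ^ 2 = (Y x Phi) ^ 2.

(* Complete integral (classical sense) of the PDE on U, for a two-parameter
   family Yp A B, parameters ranging over P: every member solves the PDE, and
   the 2x3 matrix  [[Y_A, Y_xA, Y_PhiA], [Y_B, Y_xB, Y_PhiB]]  has rank 2
   (its two rows are linearly independent) at every point. *)
Definition complete_integral (h : R -> R) (U : R -> R -> Prop) (P : R -> R -> Prop)
    (Yp : R -> R -> R -> R -> R) : Prop :=
  (forall A B, P A B -> solves_PDE h U (Yp A B)) /\
  (forall A B x Phi, P A B -> U x Phi ->
    let rA1 := fun a => Yp a B x Phi in
    let rA2 := fun a => pdx (Yp a B) x Phi in
    let rA3 := fun a => pdy (Yp a B) x Phi in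
    let rB1 := fun b => Yp A b x Phi in
    let rB2 := fun b => pdx (Yp A b) x Phi in
    let rB3 := fun b => pdy (Yp A b) x Phi in
    ex_derive rA1 A /\ ex_derive rA2 A /\ ex_derive rA3 A /\
    ex_derive rB1 B /\ ex_derive rB2 B /\ ex_derive rB3 B /\
    (forall al be : R,
       al * Derive rA1 A + be * Derive rB1 B = 0 ->
       al * Derive rA2 A + be * Derive rB2 B = 0 ->
       al * Derive rA3 A + be * Derive rB3 B = 0 ->
       al = 0 /\ be = 0)).

Definition Yfam (u1 u2 : R -> R) (A B x Phi : R) : R :=
  ctxY (fun t => A * u1 t + B * u2 t) x Phi.

(* Main.v *)
Require Import Defs.
From Stdlib Require Import Reals Lra Psatz FunctionalExtensionality ClassicalEpsilon.
From Coquelicot Require Import Coquelicot.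
Open Scope R_scope.

Section Cont.
Context {T : UniformSpace}.
Lemma cR_plus (f g : T -> R) x : continuous f x -> continuous g x -> continuous (fun y => f y + g y) x.
Proof. intros; now apply (continuous_plus f g). Qed.
Lemma cR_opp (f : T -> R) x : continuous f x -> continuous (fun y => - f y) x.
Proof. intros; now apply (continuous_opp f). Qed.
Lemma cR_minus (f g : T -> R) x : continuous f x -> continuous g x -> continuous (fun y => f y - g y) x.
Proof. intros; apply cR_plus; auto; now apply cR_opp. Qed.
Lemma cR_mult (f g : T -> R) x : continuous f x -> continuous g x -> continuous (fun y => f y * g y) x.
Proof. intros; now apply (continuous_mult f g). Qed.
Lemma cR_const (c : R) x : continuous (fun _ : T => c) x.
Proof. apply continuous_const. Qed.
Lemma cR_pow (f : T -> R) n x : continuous f x -> continuous (fun y => f y ^ n) x.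
Proof. intros; induction n; simpl. apply cR_const. now apply cR_mult. Qed.
Lemma cR_inv (f : T -> R) x : continuous f x -> f x <> 0 -> continuous (fun y => / f y) x.
Proof. intros H N. apply (continuous_comp f Rinv). auto. now apply continuous_Rinv. Qed.
Lemma cR_div (f g : T -> R) x : continuous f x -> continuous g x -> g x <> 0 -> continuous (fun y => f y / g y) x.
Proof. intros; unfold Rdiv; apply cR_mult; auto; now apply cR_inv. Qed.
Lemma cR_comp (f : T -> R) (g : R -> R) x : continuous f x -> continuous g (f x) -> continuous (fun y => g (f y)) x.
Proof. intros; now apply (continuous_comp f g). Qed.
End Cont.
Lemma cR_fst {U V : UniformSpace} (p : U * V) : continuous (fun q => fst q) p.
Proof. destruct p; apply continuous_fst. Qed.
Lemma cR_snd {U V : UniformSpace} (p : U * V) : continuous (fun q => snd q) p.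
Proof. destruct p; apply continuous_snd. Qed.
Lemma cR_abs (x : R) : continuous Rabs x.
Proof. apply continuous_Rabs. Qed.

Ltac eta := repeat match goal with
  | |- context [Derive (fun x0 : R => ?f x0)] => change (Derive (fun x0 : R => f x0)) with (Derive f)
  end.

Lemma sol_d1 h u : is_sol h u -> forall x, is_derive u x (Derive u x).
Proof. intros S x. apply Derive_correct. apply S. Qed.
Lemma sol_ex2 h u : is_sol h u -> forall x, ex_derive (Derive u) x.
Proof. intros S x. eexists. apply S. Qed.
Lemma sol_d2 h u : is_sol h u -> forall x, Derive (Derive u) x = - h x * u x.
Proof. intros S x. apply is_derive_unique. apply S. Qed.

Lemma cont_of_derive (f : R -> R) x l : is_derive f x l -> continuity_pt f x.
Proof. intro H. apply continuity_pt_filterlim. exact (ex_derive_continuous f x (ex_intro _ l H)). Qed.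

Lemma Derive_lin h u1 u2 a b : is_sol h u1 -> is_sol h u2 -> forall x,
  Derive (fun t => a * u1 t + b * u2 t) x = a * Derive u1 x + b * Derive u2 x.
Proof.
  intros S1 S2 x. apply is_derive_unique. auto_derive.
  - repeat split; [apply S1 | apply S2].
  - rewrite !Rmult_1_l; reflexivity.
Qed.

Lemma sol_lin h u1 u2 a b : is_sol h u1 -> is_sol h u2 ->
  is_sol h (fun t => a * u1 t + b * u2 t).
Proof.
  intros S1 S2 x. split.
  - eexists. apply (is_derive_plus (fun t => a * u1 t) (fun t => b * u2 t));
    apply is_derive_scal; eapply sol_d1; eauto.
  - apply (is_derive_ext (fun t => a * Derive u1 t + b * Derive u2 t)).
    + intro t. symmetry. apply Derive_lin with h; auto.
    + replace (- h x * (a * u1 x + b * u2 x)) with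
        (a * (- h x * u1 x) + b * (- h x * u2 x)) by ring.
      apply (is_derive_plus (fun t => a * Derive u1 t) (fun t => b * Derive u2 t));
      apply is_derive_scal; [apply S1 | apply S2].
Qed.

Lemma wronsk_const h v1 v2 : is_sol h v1 -> is_sol h v2 ->
  forall x y, wronsk v1 v2 x = wronsk v1 v2 y.
Proof.
  intros S1 S2 x y.
  assert (D : forall t, is_derive (wronsk v1 v2) t 0).
  { intro t. unfold wronsk.
    apply (is_derive_ext (fun t => Derive v1 t * v2 t - v1 t * Derive v2 t)); [reflexivity|].
    auto_derive.
    - repeat split; try apply S1; try apply S2; eapply sol_ex2; eauto.
    - eta. rewrite (sol_d2 h v1 S1 t), (sol_d2 h v2 S2 t). ring. }
  destruct (MVT_gen (wronsk v1 v2) x y (fun _ => 0)) as [c [_ Hc]].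
  - intros; apply D.
  - intros; eapply cont_of_derive; apply D.
  - lra.
Qed.

Lemma uniq_ode h w : (forall x, continuous h x) -> is_sol h w ->
  forall x0, w x0 = 0 -> Derive w x0 = 0 -> forall x, w x = 0.
Proof.
  intros hc S x0 H0 H1 x.
  set (E := fun t => w t ^ 2 + Derive w t ^ 2).
  assert (DE : forall t, is_derive E t (2 * w t * Derive w t * (1 - h t))).
  { intro t. unfold E. auto_derive.
    - repeat split; [apply S | eapply sol_ex2; eauto].
    - eta. rewrite (sol_d2 h w S t). ring. }
  destruct (continuity_ab_maj (fun t => Rabs (1 - h t)) (Rmin x0 x) (Rmax x0 x))
    as [Mx [HM _]].
  { apply Rmin_Rmax. }
  { intros c _. apply continuity_pt_filterlim.
    apply (cR_comp (fun t => 1 - h t) Rabs). apply cR_minus. apply cR_const. apply hc. apply cR_abs. }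
  set (M := Rabs (1 - h Mx)).
  set (sg := if Rle_dec x0 x then 1 else -1).
  assert (Hsg : sg * (x - x0) = Rabs (x - x0)).
  { unfold sg; destruct (Rle_dec x0 x).
    - rewrite Rabs_right; lra.
    - rewrite Rabs_left; lra. }
  set (G := fun t => E t * exp (- sg * M * (t - x0))).
  assert (DG : forall t, is_derive G t
     ((2 * w t * Derive w t * (1 - h t) - sg * M * E t) * exp (- sg * M * (t - x0)))).
  { intro t. unfold G, E. auto_derive.
    - repeat split; [apply S | eapply sol_ex2; eauto].
    - eta. rewrite (sol_d2 h w S t). unfold Rminus; ring. }
  assert (Hb : forall t, Rmin x0 x <= t <= Rmax x0 x -> Rabs (1 - h t) <= M)
    by (intros; apply HM; auto).
  destruct (MVT_gen G x0 x (fun t => (2 * w t * Derive w t * (1 - h t) - sg * M * E t) * exp (- sg * M * (t - x0))))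
    as [c [Hc HG]].
  { intros t _; apply DG. }
  { intros t _; eapply cont_of_derive; apply DG. }
  assert (G0 : G x0 = 0) by (unfold G, E; rewrite H0, H1; ring).
  assert (Ec : 0 <= E c) by (unfold E; nra).
  assert (A1 : Rabs (2 * w c * Derive w c) <= E c).
  { unfold E. pose proof (pow2_ge_0 (w c - Derive w c)). pose proof (pow2_ge_0 (w c + Derive w c)).
    destruct (Rle_dec 0 (2 * w c * Derive w c)); [rewrite Rabs_right by lra | rewrite Rabs_left by lra]; nra. }
  assert (A2 : 2 * w c * Derive w c * (1 - h c) * (x - x0) <= E c * M * Rabs (x - x0)).
  { eapply Rle_trans. apply Rle_abs. rewrite Rabs_mult, (Rabs_mult (2 * w c * Derive w c)).
    apply Rmult_le_compat_r. apply Rabs_pos. apply Rmult_le_compat; try apply Rabs_pos; auto. }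
  assert (Ge : exp (- sg * M * (c - x0)) > 0) by apply exp_pos.
  assert (Gx : G x <= 0).
  { assert (G x = ((2 * w c * Derive w c * (1 - h c)) * (x - x0) - sg * (x - x0) * M * E c) * exp (- sg * M * (c - x0))) by lra.
    rewrite H, Hsg. apply Rmult_le_0_r; lra. }
  unfold G in Gx. pose proof (exp_pos (- sg * M * (x - x0))).
  assert (E x <= 0) by nra. unfold E in H2. nra.
Qed.

Lemma wronsk_nz h u1 u2 : (forall x, continuous h x) -> is_sol h u1 -> is_sol h u2 ->
  lin_indep u1 u2 -> forall x, wronsk u1 u2 x <> 0.
Proof.
  intros hc S1 S2 I x0 W0. unfold wronsk in W0.
  assert (K : forall al be, al * u1 x0 + be * u2 x0 = 0 ->
             al * Derive u1 x0 + be * Derive u2 x0 = 0 -> al = 0 /\ be = 0).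
  { intros al be E0 E1. apply I. intro x.
    apply (uniq_ode h (fun t => al * u1 t + be * u2 t) hc (sol_lin h u1 u2 al be S1 S2) x0); auto.
    rewrite (Derive_lin h u1 u2 al be S1 S2 x0). auto. }
  destruct (Req_dec (u1 x0) 0) as [Z1|Z1]; [destruct (Req_dec (u2 x0) 0) as [Z2|Z2]|].
  - destruct (Req_dec (Derive u1 x0) 0) as [D1|D1]; [destruct (Req_dec (Derive u2 x0) 0) as [D2|D2]|].
    + destruct (K 1 0); [rewrite Z1, Z2; ring | rewrite D1, D2; ring | lra].
    + destruct (K (Derive u2 x0) (- Derive u1 x0)); [rewrite Z1, Z2; ring | ring | lra].
    + destruct (K (Derive u2 x0) (- Derive u1 x0)); [rewrite Z1, Z2; ring | ring | lra].
  - destruct (K (u2 x0) (- u1 x0)); [ring | lra | lra].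
  - destruct (K (u2 x0) (- u1 x0)); [ring | lra | lra].
Qed.

Lemma D_pos h u : (forall x, continuous h x) -> is_sol h u -> (exists y, u y <> 0) ->
  forall x Phi, Phi <> 0 -> 0 < Phi ^ 2 * u x ^ 2 + Derive u x ^ 2.
Proof.
  intros hc S [y Hy] x Phi HP.
  destruct (Req_dec (u x) 0) as [Z|Z].
  - destruct (Req_dec (Derive u x) 0) as [Z'|Z'].
    + exfalso. apply Hy. now apply (uniq_ode h u hc S x).
    + pose proof (pow2_ge_0 (Phi * u x)). assert (0 < Derive u x ^ 2) by (apply pow2_gt_0; auto). nra.
  - assert (0 < Phi ^ 2) by (apply pow2_gt_0; auto). assert (0 < u x ^ 2) by (apply pow2_gt_0; auto).
    pose proof (pow2_ge_0 (Derive u x)). nra.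
Qed.

Lemma wronsk_lin h u1 u2 a b c d : is_sol h u1 -> is_sol h u2 -> forall x,
  wronsk (fun t => a * u1 t + b * u2 t) (fun t => c * u1 t + d * u2 t) x
  = (a * d - b * c) * wronsk u1 u2 x.
Proof.
  intros S1 S2 x. unfold wronsk. rewrite !(Derive_lin h u1 u2) by auto. ring.
Qed.

Lemma indep_lin u1 u2 a b c d : lin_indep u1 u2 -> a * d - b * c <> 0 ->
  lin_indep (fun t => a * u1 t + b * u2 t) (fun t => c * u1 t + d * u2 t).
Proof.
  intros I Dt al be E.
  destruct (I (al * a + be * c) (al * b + be * d)) as [E1 E2].
  { intro x. rewrite <- (E x). ring. }
  split.
  - apply (Rmult_eq_reg_r (a * d - b * c)); auto.
    replace (al * (a * d - b * c)) with (d * (al * a + be * c) - c * (al * b + be * d)) by ring.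
    rewrite E1, E2; ring.
  - apply (Rmult_eq_reg_r (a * d - b * c)); auto.
    replace (be * (a * d - b * c)) with (a * (al * b + be * d) - b * (al * a + be * c)) by ring.
    rewrite E1, E2; ring.
Qed.


Definition C1p (f : R -> R -> R) (p : R * R) : Prop :=
  locally p (fun q => ex_derive (fun t => f t (snd q)) (fst q) /\
                      ex_derive (fun s => f (fst q) s) (snd q)) /\
  continuous (fun q : R * R => f (fst q) (snd q)) p /\
  continuous (fun q : R * R => pdx f (fst q) (snd q)) p /\
  continuous (fun q : R * R => pdy f (fst q) (snd q)) p.

Lemma C1p_C1_on (V : R * R -> Prop) f : (forall p, V p -> C1p f p) -> C1_on V f.
Proof.
  intros H p Vp. destruct (H p Vp) as [L [C [Cx Cy]]].
  apply locally_singleton in L. tauto.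
Qed.

Lemma C1p_cont f p : C1p f p -> continuous (fun q : R * R => f (fst q) (snd q)) p.
Proof. intros [_ [C _]]; exact C. Qed.

Lemma C1p_ext f g p : C1p f p -> (forall x y, f x y = g x y) -> C1p g p.
Proof.
  intros H E. replace g with f; auto.
  apply functional_extensionality; intro x; apply functional_extensionality; intro y; auto.
Qed.

Lemma C1p_const c p : C1p (fun _ _ => c) p.
Proof.
  split; [|split; [|split]].
  - apply filter_forall. intros; split; apply ex_derive_const.
  - apply cR_const.
  - unfold pdx. apply (continuous_ext (fun _ => 0)). intro; symmetry; apply Derive_const. apply cR_const.
  - unfold pdy. apply (continuous_ext (fun _ => 0)). intro; symmetry; apply Derive_const. apply cR_const.
Qed.

Lemma C1p_fst p : C1p (fun x _ => x) p.
Proof.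
  split; [|split; [|split]].
  - apply filter_forall. intros; split; [apply ex_derive_id | apply ex_derive_const].
  - apply cR_fst.
  - unfold pdx. apply (continuous_ext (fun _ => 1)). intro; symmetry; apply Derive_id. apply cR_const.
  - unfold pdy. apply (continuous_ext (fun _ => 0)). intro; symmetry; apply Derive_const. apply cR_const.
Qed.

Lemma C1p_snd p : C1p (fun _ y => y) p.
Proof.
  split; [|split; [|split]].
  - apply filter_forall. intros; split; [apply ex_derive_const | apply ex_derive_id].
  - apply cR_snd.
  - unfold pdx. apply (continuous_ext (fun _ => 0)). intro; symmetry; apply Derive_const. apply cR_const.
  - unfold pdy. apply (continuous_ext (fun _ => 1)). intro; symmetry; apply Derive_id. apply cR_const.
Qed.

Lemma C1p_plus f g p : C1p f p -> C1p g p -> C1p (fun x y => f x y + g x y) p.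
Proof.
  intros [Lf [Cf [Xf Yf]]] [Lg [Cg [Xg Yg]]].
  pose proof (filter_and _ _ Lf Lg) as L.
  split; [|split; [|split]].
  - eapply filter_imp; [|exact L]. intros q [[A B] [C D]].
    split; [exact (ex_derive_plus (fun t => f t (snd q)) (fun t => g t (snd q)) _ A C) | exact (ex_derive_plus (fun t => f (fst q) t) (fun t => g (fst q) t) _ B D)].
  - now apply cR_plus.
  - eapply continuous_ext_loc; [|apply (cR_plus _ _ _ Xf Xg)].
    eapply filter_imp; [|exact L]. intros q [[A B] [C D]].
    unfold pdx. symmetry. apply (Derive_plus (fun t => f t (snd q)) (fun t => g t (snd q))); auto.
  - eapply continuous_ext_loc; [|apply (cR_plus _ _ _ Yf Yg)].
    eapply filter_imp; [|exact L]. intros q [[A B] [C D]].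
    unfold pdy. symmetry. apply (Derive_plus (fun t => f (fst q) t) (fun t => g (fst q) t)); auto.
Qed.

Lemma C1p_mult f g p : C1p f p -> C1p g p -> C1p (fun x y => f x y * g x y) p.
Proof.
  intros [Lf [Cf [Xf Yf]]] [Lg [Cg [Xg Yg]]].
  pose proof (filter_and _ _ Lf Lg) as L.
  split; [|split; [|split]].
  - eapply filter_imp; [|exact L]. intros q [[A B] [C D]].
    split; [exact (ex_derive_mult (fun t => f t (snd q)) (fun t => g t (snd q)) _ A C) | exact (ex_derive_mult (fun t => f (fst q) t) (fun t => g (fst q) t) _ B D)].
  - now apply cR_mult.
  - eapply continuous_ext_loc; [|apply (cR_plus _ _ _ (cR_mult _ _ _ Xf Cg) (cR_mult _ _ _ Cf Xg))].
    eapply filter_imp; [|exact L]. intros q [[A B] [C D]].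
    unfold pdx. symmetry. apply (Derive_mult (fun t => f t (snd q)) (fun t => g t (snd q))); auto.
  - eapply continuous_ext_loc; [|apply (cR_plus _ _ _ (cR_mult _ _ _ Yf Cg) (cR_mult _ _ _ Cf Yg))].
    eapply filter_imp; [|exact L]. intros q [[A B] [C D]].
    unfold pdy. symmetry. apply (Derive_mult (fun t => f (fst q) t) (fun t => g (fst q) t)); auto.
Qed.

Lemma C1p_comp1 (phi dphi : R -> R) f p :
  C1p f p -> locally (f (fst p) (snd p)) (fun y => is_derive phi y (dphi y)) ->
  continuous dphi (f (fst p) (snd p)) ->
  C1p (fun x y => phi (f x y)) p.
Proof.
  intros [Lf [Cf [Xf Yf]]] Lphi Cd.
  assert (L' : locally p (fun q => is_derive phi (f (fst q) (snd q)) (dphi (f (fst q) (snd q))))).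
  { apply Cf in Lphi. exact Lphi. }
  pose proof (filter_and _ _ Lf L') as L.
  assert (Cdc : continuous (fun q : R * R => dphi (f (fst q) (snd q))) p).
  { apply (cR_comp (fun q : R * R => f (fst q) (snd q)) dphi); auto. }
  split; [|split; [|split]].
  - eapply filter_imp; [|exact L]. intros q [[A B] C].
    split; [apply (ex_derive_comp phi (fun t => f t (snd q))) | apply (ex_derive_comp phi (fun t => f (fst q) t))]; auto; eexists; apply C.
  - apply (cR_comp (fun q : R * R => f (fst q) (snd q)) phi); auto.
    apply locally_singleton in Lphi. apply continuity_pt_filterlim. eapply cont_of_derive; eauto.
  - eapply continuous_ext_loc; [|apply (cR_mult _ _ _ Xf Cdc)].
    eapply filter_imp; [|exact L]. intros q [[A B] C].
    unfold pdx. symmetry. rewrite (Derive_comp phi (fun t => f t (snd q))); auto.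
    f_equal. apply is_derive_unique; auto. eexists; apply C.
  - eapply continuous_ext_loc; [|apply (cR_mult _ _ _ Yf Cdc)].
    eapply filter_imp; [|exact L]. intros q [[A B] C].
    unfold pdy. symmetry. rewrite (Derive_comp phi (fun t => f (fst q) t)); auto.
    f_equal. apply is_derive_unique; auto. eexists; apply C.
Qed.

Lemma ballR (x y e : R) : ball x e y <-> Rabs (y - x) < e.
Proof. split; intro H; exact H. Qed.
Lemma ball2 (x y x' y' e : R) : ball (x, y) e (x', y') <-> Rabs (x' - x) < e /\ Rabs (y' - y) < e.
Proof. split; intro H; exact H. Qed.
Lemma ball3 (x a b x' a' b' e : R) : ball (x, (a, b)) e (x', (a', b')) <->
  Rabs (x' - x) < e /\ Rabs (a' - a) < e /\ Rabs (b' - b) < e.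
Proof. split; intro H; exact H. Qed.

Lemma cont_pair {U : UniformSpace} {V W : UniformSpace} (f : U -> V) (g : U -> W) x :
  continuous f x -> continuous g x -> continuous (fun y => (f y, g y)) x.
Proof.
  intros Hf Hg. apply (continuous_comp_2 f g (fun a b => (a, b))); auto.
  apply (continuous_ext (fun z => z)). intros [a b]; reflexivity. apply continuous_id.
Qed.

Lemma cont2_eps (F : R * R -> R) x y : continuous F (x, y) ->
  forall eps, 0 < eps -> exists d, 0 < d /\ forall x' y', Rabs (x' - x) < d -> Rabs (y' - y) < d ->
    Rabs (F (x', y') - F (x, y)) < eps.
Proof.
  intros C eps He. apply filterlim_locally with (eps := mkposreal eps He) in C.
  destruct C as [d Hd]. exists d. split; [apply cond_pos|]. intros x' y' H1 H2.
  apply (Hd (x', y')). now apply ball2.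
Qed.

Lemma cont3_eps (F : R * (R * R) -> R) x a b : continuous F (x, (a, b)) ->
  forall eps, 0 < eps -> exists d, 0 < d /\ forall x' a' b', Rabs (x' - x) < d -> Rabs (a' - a) < d ->
    Rabs (b' - b) < d -> Rabs (F (x', (a', b')) - F (x, (a, b))) < eps.
Proof.
  intros C eps He. apply filterlim_locally with (eps := mkposreal eps He) in C.
  destruct C as [d Hd]. exists d. split; [apply cond_pos|]. intros x' a' b' H1 H2 H3.
  apply (Hd (x', (a', b'))). now apply ball3.
Qed.

Lemma cont1_eps (F : R -> R) x : continuous F x ->
  forall eps, 0 < eps -> exists d, 0 < d /\ forall x', Rabs (x' - x) < d -> Rabs (F x' - F x) < eps.
Proof.
  intros C eps He. apply filterlim_locally with (eps := mkposreal eps He) in C.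
  destruct C as [d Hd]. exists d. split; [apply cond_pos|]. intros x' H1.
  apply (Hd x'). now apply ballR.
Qed.

Lemma cont2_of_eps (F : R -> R -> R) a b :
  (forall eps, 0 < eps -> exists d, 0 < d /\ forall a' b', Rabs (a' - a) < d -> Rabs (b' - b) < d ->
    Rabs (F a' b' - F a b) < eps) -> continuous (fun q : R * R => F (fst q) (snd q)) (a, b).
Proof.
  intro H. apply filterlim_locally. intro eps. destruct (H eps (cond_pos eps)) as [d [Hd P]].
  exists (mkposreal d Hd). intros [a' b'] B. apply ball2 in B. simpl. apply ballR. apply P; apply B.
Qed.

Lemma locally_box (P : R * R -> Prop) a b : locally (a, b) P ->
  exists d, 0 < d /\ forall a' b', Rabs (a' - a) < d -> Rabs (b' - b) < d -> P (a', b').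
Proof.
  intros [d Hd]. exists d. split; [apply cond_pos|]. intros. apply Hd. now apply ball2.
Qed.

Lemma box_locally (P : R * R -> Prop) a b d : 0 < d ->
  (forall a' b', Rabs (a' - a) < d -> Rabs (b' - b) < d -> P (a', b')) -> locally (a, b) P.
Proof.
  intros Hd H. exists (mkposreal d Hd). intros [a' b'] B. apply ball2 in B. apply H; apply B.
Qed.

Lemma locally1_box (P : R -> Prop) a : locally a P ->
  exists d, 0 < d /\ forall a', Rabs (a' - a) < d -> P a'.
Proof.
  intros [d Hd]. exists d. split; [apply cond_pos|]. intros. apply Hd. now apply ballR.
Qed.

Lemma C1p_opp f p : C1p f p -> C1p (fun x y => - f x y) p.
Proof.
  intro H. apply C1p_ext with (fun x y => (fun _ _ => -1) x y * f x y).
  apply C1p_mult; auto. apply C1p_const. intros; ring.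
Qed.

Lemma C1p_minus f g p : C1p f p -> C1p g p -> C1p (fun x y => f x y - g x y) p.
Proof. intros. apply C1p_plus; auto. now apply C1p_opp. Qed.

Lemma C1p_pow f n p : C1p f p -> C1p (fun x y => f x y ^ n) p.
Proof.
  intro H. induction n.
  - apply (C1p_ext (fun _ _ => 1)). apply C1p_const. intros; simpl; reflexivity.
  - apply (C1p_ext (fun x y => f x y * f x y ^ n)). now apply C1p_mult. intros; simpl; reflexivity.
Qed.

Lemma C1p_inv f p : C1p f p -> f (fst p) (snd p) <> 0 -> C1p (fun x y => / f x y) p.
Proof.
  intros H N. apply (C1p_comp1 Rinv (fun y => - / y ^ 2)); auto.
  - assert (O := open_neq 0 _ N). eapply filter_imp; [|exact O].
    intros y Hy. simpl in Hy. apply (is_derive_ext (fun y => / y)); [reflexivity|].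
    auto_derive; auto. field; auto.
  - apply cR_opp. apply cR_inv. apply cR_pow. apply continuous_id.
    apply pow_nonzero; auto.
Qed.

Lemma C1p_div f g p : C1p f p -> C1p g p -> g (fst p) (snd p) <> 0 -> C1p (fun x y => f x y / g x y) p.
Proof. intros. unfold Rdiv. apply C1p_mult; auto. now apply C1p_inv. Qed.

Lemma C1p_fun1 (phi dphi : R -> R) p : (forall y, is_derive phi y (dphi y)) ->
  (forall y, continuous dphi y) -> C1p (fun x _ => phi x) p.
Proof.
  intros D C. apply (C1p_comp1 phi dphi (fun x _ => x)). apply C1p_fst.
  apply filter_forall; auto. auto.
Qed.

Lemma C1p_aff g c1 d1 c2 d2 X Y : C1p g (c1 * X + d1, c2 * Y + d2) ->
  C1p (fun X Y => g (c1 * X + d1) (c2 * Y + d2)) (X, Y).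
Proof.
  intros [L [C [Cx Cy]]].
  set (m := fun q : R * R => (c1 * fst q + d1, c2 * snd q + d2)).
  assert (Cm : continuous m (X, Y)).
  { apply cont_pair; apply cR_plus; try apply cR_const; apply cR_mult; try apply cR_const.
    apply cR_fst. apply cR_snd. }
  assert (L' : locally (X, Y) (fun q => ex_derive (fun t => g t (snd (m q))) (fst (m q)) /\
                      ex_derive (fun s => g (fst (m q)) s) (snd (m q)))).
  { exact (Cm _ L). }
  assert (Cx' := continuous_comp m (fun q : R * R => pdx g (fst q) (snd q)) (X, Y) Cm Cx).
  assert (Cy' := continuous_comp m (fun q : R * R => pdy g (fst q) (snd q)) (X, Y) Cm Cy).
  split; [|split; [|split]].
  - eapply filter_imp; [|exact L']. intros [x y] [A B]; simpl in A, B |- *. split.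
    + apply (ex_derive_comp (fun t => g t (c2 * y + d2)) (fun t => c1 * t + d1)); auto.
      auto_derive; auto.
    + apply (ex_derive_comp (fun t => g (c1 * x + d1) t) (fun t => c2 * t + d2)); auto.
      auto_derive; auto.
  - exact (continuous_comp m (fun q : R * R => g (fst q) (snd q)) (X, Y) Cm C).
  - eapply continuous_ext_loc; [| apply (cR_mult _ _ _ (cR_const c1 _) Cx')].
    eapply filter_imp; [|exact L']. intros [x y] [A B]; simpl in A, B |- *.
    unfold pdx. rewrite (Derive_comp (fun t => g t (c2 * y + d2)) (fun t => c1 * t + d1)); [| auto | auto_derive; auto].
    f_equal. symmetry. apply is_derive_unique. auto_derive; auto; ring.
  - eapply continuous_ext_loc; [| apply (cR_mult _ _ _ (cR_const c2 _) Cy')].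
    eapply filter_imp; [|exact L']. intros [x y] [A B]; simpl in A, B |- *.
    unfold pdy. rewrite (Derive_comp (fun t => g (c1 * x + d1) t) (fun t => c2 * t + d2)); [| auto | auto_derive; auto].
    f_equal. symmetry. apply is_derive_unique. auto_derive; auto; ring.
Qed.


Lemma between_abs x x' c : Rmin x x' <= c <= Rmax x x' -> Rabs (c - x) <= Rabs (x' - x).
Proof. intro H. apply Rabs_le_between_min_max. rewrite Rmin_comm, Rmax_comm. exact H. Qed.

Lemma impl_deriv (k kx ka : R -> R -> R) (g : R -> R) a1 :
  (forall x a, is_derive (fun t => k t a) x (kx x a)) ->
  (forall x a, is_derive (fun t => k x t) a (ka x a)) ->
  continuous (fun w : R * R => kx (fst w) (snd w)) (g a1, a1) ->
  continuous (fun w : R * R => ka (fst w) (snd w)) (g a1, a1) ->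
  kx (g a1) a1 <> 0 ->
  locally a1 (fun a => k (g a) a = 0) ->
  continuous g a1 ->
  is_derive g a1 (- ka (g a1) a1 / kx (g a1) a1).
Proof.
  intros Dx Da Cx Ca N0 Lr Cg.
  set (x1 := g a1) in *.
  apply is_derive_Reals. intros eps He.
  set (P := fun w : R * (R * R) => ka x1 (snd (snd w)) / kx (fst w) (fst (snd w))).
  assert (CP : continuous P (x1, (a1, a1))).
  { unfold P. apply cR_div.
    - apply (continuous_comp (fun w : R * (R * R) => (x1, snd (snd w))) (fun w : R * R => ka (fst w) (snd w))).
      + apply cont_pair. apply cR_const.
        apply (continuous_comp (fun w : R * (R * R) => snd w) (fun v : R * R => snd v)); apply cR_snd.
      + exact Ca.
    - apply (continuous_comp (fun w : R * (R * R) => (fst w, fst (snd w))) (fun w : R * R => kx (fst w) (snd w))).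
      + apply cont_pair. apply cR_fst.
        apply (continuous_comp (fun w : R * (R * R) => snd w) (fun v : R * R => fst v)); [apply cR_snd | apply cR_fst].
      + exact Cx.
    - exact N0. }
  destruct (cont3_eps P x1 a1 a1 CP eps He) as [t1 [Ht1 P1]].
  assert (Hk : 0 < Rabs (kx x1 a1) / 2) by (apply Rabs_pos_lt in N0; lra).
  destruct (cont2_eps (fun w => kx (fst w) (snd w)) x1 a1 Cx _ Hk) as [t2 [Ht2 P2]].
  set (tau := Rmin t1 t2).
  assert (Htau : 0 < tau) by (apply Rmin_pos; auto).
  destruct (cont1_eps g a1 Cg tau Htau) as [sg [Hsg Psg]].
  destruct (locally1_box _ _ Lr) as [r [Hr Pr]].
  assert (Hd : 0 < Rmin sg (Rmin r tau)) by (repeat apply Rmin_pos; auto).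
  exists (mkposreal _ Hd). simpl. intros h Hh0 Hh.
  assert (h1 : Rabs h < sg) by (eapply Rlt_le_trans; [exact Hh| apply Rmin_l]).
  assert (h2 : Rabs h < r) by (eapply Rlt_le_trans; [exact Hh| eapply Rle_trans; [apply Rmin_r| apply Rmin_l]]).
  assert (h3 : Rabs h < tau) by (eapply Rlt_le_trans; [exact Hh| eapply Rle_trans; [apply Rmin_r| apply Rmin_r]]).
  assert (tt1 : tau <= t1) by apply Rmin_l.
  assert (tt2 : tau <= t2) by apply Rmin_r.
  set (x' := g (a1 + h)).
  assert (Hx' : Rabs (x' - x1) < tau) by (apply Psg; replace (a1 + h - a1) with h by ring; auto).
  assert (R1 : k x' (a1 + h) = 0) by (apply Pr; replace (a1 + h - a1) with h by ring; auto).
  assert (R0 : k x1 a1 = 0) by (apply Pr; rewrite Rminus_eq_0, Rabs_R0; auto).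
  destruct (MVT_gen (fun t => k t (a1 + h)) x1 x' (fun t => kx t (a1 + h))) as [c1 [Hc1 E1]].
  { intros; apply Dx. } { intros; eapply cont_of_derive; apply Dx. }
  destruct (MVT_gen (fun t => k x1 t) a1 (a1 + h) (fun t => ka x1 t)) as [c2 [Hc2 E2]].
  { intros; apply Da. } { intros; eapply cont_of_derive; apply Da. }
  apply between_abs in Hc1. apply between_abs in Hc2.
  replace (a1 + h - a1) with h in * by ring.
  assert (Q2 := P2 c1 (a1 + h) ltac:(lra) ltac:(replace (a1 + h - a1) with h by ring; lra)).
  simpl in Q2.
  assert (NZ : kx c1 (a1 + h) <> 0).
  { intro Z. rewrite Z in Q2. rewrite Rminus_0_l, Rabs_Ropp in Q2. lra. }
  assert (Q1 := P1 c1 (a1 + h) c2 ltac:(lra) ltac:(replace (a1 + h - a1) with h by ring; lra) ltac:(lra)).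
  unfold P in Q1; simpl in Q1.
  fold x'. change (g a1) with x1.
  replace ((x' - x1) / h - - ka x1 a1 / kx x1 a1) with
    (- (ka x1 c2 / kx c1 (a1 + h) - ka x1 a1 / kx x1 a1)).
  { rewrite Rabs_Ropp. exact Q1. }
  assert (E : kx c1 (a1 + h) * (x' - x1) = - (ka x1 c2 * h)) by lra.
  assert (E' : x' - x1 = - (ka x1 c2 * h) / kx c1 (a1 + h)).
  { apply (Rmult_eq_reg_l (kx c1 (a1 + h))); auto. rewrite E. field; auto. }
  rewrite E'. field; auto.
Qed.

Definition cont3 (F : R -> R -> R -> R) := forall x a b,
  continuous (fun w : R * (R * R) => F (fst w) (fst (snd w)) (snd (snd w))) (x, (a, b)).

Lemma box1_locally (P : R -> Prop) a d : 0 < d -> (forall a', Rabs (a' - a) < d -> P a') -> locally a P.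
Proof. intros Hd H. exists (mkposreal d Hd). intros y B. apply H. exact B. Qed.

Lemma abs_tri x y z : Rabs (x - z) <= Rabs (x - y) + Rabs (y - z).
Proof. replace (x - z) with ((x - y) + (y - z)) by ring. apply Rabs_triang. Qed.

Lemma cont3_comp2 F c x1 a1 : cont3 F ->
  continuous (fun w : R * R => F (fst w) (snd w) c) (x1, a1).
Proof.
  intros C. apply (continuous_comp (fun w : R * R => (fst w, (snd w, c)))
    (fun w : R * (R * R) => F (fst w) (fst (snd w)) (snd (snd w)))).
  - apply cont_pair. apply cR_fst. apply cont_pair. apply cR_snd. apply cR_const.
  - apply C.
Qed.

Lemma cont3_comp3 F c x1 b1 : cont3 F ->
  continuous (fun w : R * R => F (fst w) c (snd w)) (x1, b1).
Proof.
  intros C. apply (continuous_comp (fun w : R * R => (fst w, (c, snd w)))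
    (fun w : R * (R * R) => F (fst w) (fst (snd w)) (snd (snd w)))).
  - apply cont_pair. apply cR_fst. apply cont_pair. apply cR_const. apply cR_snd.
  - apply C.
Qed.

Lemma ift_pos (K Kx Ka Kb : R -> R -> R -> R) x0 a0 b0 :
  (forall x a b, is_derive (fun t => K t a b) x (Kx x a b)) ->
  (forall x a b, is_derive (fun t => K x t b) a (Ka x a b)) ->
  (forall x a b, is_derive (fun t => K x a t) b (Kb x a b)) ->
  cont3 K -> cont3 Kx -> cont3 Ka -> cont3 Kb ->
  K x0 a0 b0 = 0 -> 0 < Kx x0 a0 b0 ->
  exists d e (g : R -> R -> R), 0 < d /\ 0 < e /\
   (forall a b, Rabs (a - a0) < e -> Rabs (b - b0) < e -> Rabs (g a b - x0) < d /\ K (g a b) a b = 0) /\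
   (forall a b x, Rabs (a - a0) < e -> Rabs (b - b0) < e -> Rabs (x - x0) < d -> K x a b = 0 -> x = g a b) /\
   (forall a b, Rabs (a - a0) < e -> Rabs (b - b0) < e -> C1p g (a, b)).
Proof.
  intros Dx Da Db CK CKx CKa CKb K0 Kx0.
  destruct (cont3_eps _ x0 a0 b0 (CKx x0 a0 b0) (Kx x0 a0 b0 / 2) ltac:(lra)) as [rho [Hrho Prho]].
  simpl in Prho.
  assert (Pos : forall x a b, Rabs (x - x0) < rho -> Rabs (a - a0) < rho -> Rabs (b - b0) < rho -> 0 < Kx x a b).
  { intros x a b H1 H2 H3. specialize (Prho x a b H1 H2 H3). apply Rabs_def2 in Prho. lra. }
  assert (Mono : forall a b x y, Rabs (a - a0) < rho -> Rabs (b - b0) < rho ->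
     Rabs (x - x0) < rho -> Rabs (y - x0) < rho -> x < y -> K x a b < K y a b).
  { intros a b x y Ha Hb Hx Hy Hxy.
    destruct (MVT_gen (fun t => K t a b) x y (fun t => Kx t a b)) as [c [Hc E]].
    { intros; apply Dx. } { intros; eapply cont_of_derive; apply Dx. }
    rewrite Rmin_left in Hc by lra. rewrite Rmax_right in Hc by lra.
    assert (0 < Kx c a b).
    { apply Pos; auto. apply Rabs_def2 in Hx. apply Rabs_def2 in Hy. apply Rabs_def1; lra. }
    simpl in E. nra. }
  assert (Uniq : forall a b x y, Rabs (a - a0) < rho -> Rabs (b - b0) < rho ->
     Rabs (x - x0) < rho -> Rabs (y - x0) < rho -> K x a b = 0 -> K y a b = 0 -> x = y).
  { intros a b x y Ha Hb Hx Hy E1 E2.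
    destruct (Rtotal_order x y) as [H|[H|H]]; auto.
    - pose proof (Mono a b x y Ha Hb Hx Hy H). lra.
    - pose proof (Mono a b y x Ha Hb Hy Hx H). lra. }
  assert (LocRoot : forall a1 b1 x1 e, Rabs (a1 - a0) < rho -> Rabs (b1 - b0) < rho ->
     K x1 a1 b1 = 0 -> 0 < e -> Rabs (x1 - x0) + e < rho ->
     exists eta, 0 < eta /\ forall a b, Rabs (a - a1) < eta -> Rabs (b - b1) < eta ->
       exists x, Rabs (x - x1) < e /\ K x a b = 0).
  { intros a1 b1 x1 e Ha Hb R1 He Hx.
    set (e' := e / 2).
    assert (Hx1 : Rabs (x1 - x0) < rho) by lra.
    assert (Hxp : Rabs (x1 + e' - x0) < rho).
    { eapply Rle_lt_trans. apply (abs_tri _ x1). replace (x1 + e' - x1) with e' by ring.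
      rewrite Rabs_right by (unfold e'; lra). unfold e'; lra. }
    assert (Hxm : Rabs (x1 - e' - x0) < rho).
    { eapply Rle_lt_trans. apply (abs_tri _ x1). replace (x1 - e' - x1) with (- e') by ring.
      rewrite Rabs_Ropp, Rabs_right by (unfold e'; lra). unfold e'; lra. }
    assert (Kp : 0 < K (x1 + e') a1 b1).
    { rewrite <- R1. apply Mono; auto. unfold e'; lra. }
    assert (Kn : K (x1 - e') a1 b1 < 0).
    { rewrite <- R1. apply Mono; auto. unfold e'; lra. }
    destruct (cont3_eps _ _ _ _ (CK (x1 + e') a1 b1) _ Kp) as [n1 [Hn1 Pn1]].
    destruct (cont3_eps _ _ _ _ (CK (x1 - e') a1 b1) (- K (x1 - e') a1 b1) ltac:(lra)) as [n2 [Hn2 Pn2]].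
    simpl in Pn1, Pn2.
    exists (Rmin n1 n2). split. apply Rmin_pos; auto.
    intros a b Ha' Hb'.
    assert (Ha1 : Rabs (a - a1) < n1) by (eapply Rlt_le_trans; [exact Ha'|apply Rmin_l]).
    assert (Ha2 : Rabs (a - a1) < n2) by (eapply Rlt_le_trans; [exact Ha'|apply Rmin_r]).
    assert (Hb1 : Rabs (b - b1) < n1) by (eapply Rlt_le_trans; [exact Hb'|apply Rmin_l]).
    assert (Hb2 : Rabs (b - b1) < n2) by (eapply Rlt_le_trans; [exact Hb'|apply Rmin_r]).
    assert (Q1 := Pn1 (x1 + e') a b ltac:(rewrite Rminus_eq_0, Rabs_R0; auto) Ha1 Hb1).
    assert (Q2 := Pn2 (x1 - e') a b ltac:(rewrite Rminus_eq_0, Rabs_R0; auto) Ha2 Hb2).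
    apply Rabs_def2 in Q1. apply Rabs_def2 in Q2.
    destruct (IVT (fun t => K t a b) (x1 - e') (x1 + e')) as [z [Hz Kz]].
    { intro t. eapply cont_of_derive. apply Dx. }
    { unfold e'; lra. } { simpl; lra. } { simpl; lra. }
    exists z. split; auto. apply Rabs_def1; unfold e' in *; lra. }
  set (d := rho / 2).
  assert (Hd : 0 < d) by (unfold d; lra).
  destruct (LocRoot a0 b0 x0 d) as [eta0 [Heta0 Peta0]]; auto.
  1, 2 : rewrite Rminus_eq_0, Rabs_R0; auto.
  { rewrite Rminus_eq_0, Rabs_R0. unfold d; lra. }
  set (e := Rmin eta0 rho).
  assert (He : 0 < e) by (apply Rmin_pos; auto).
  assert (Her : e <= rho) by apply Rmin_r.
  assert (Hee : e <= eta0) by apply Rmin_l.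
  set (g := fun a b => epsilon (inhabits 0) (fun x => Rabs (x - x0) < d /\ K x a b = 0)).
  assert (G1 : forall a b, Rabs (a - a0) < e -> Rabs (b - b0) < e -> Rabs (g a b - x0) < d /\ K (g a b) a b = 0).
  { intros a b Ha Hb. unfold g. apply epsilon_spec.
    destruct (Peta0 a b) as [x [Hx Kx']]; try lra. exists x; auto. }
  assert (G2 : forall a b x, Rabs (a - a0) < e -> Rabs (b - b0) < e -> Rabs (x - x0) < d -> K x a b = 0 -> x = g a b).
  { intros a b x Ha Hb Hx Kx'. destruct (G1 a b Ha Hb) as [Hg Kg].
    apply (Uniq a b); try lra; unfold d in *; lra. }
  assert (ContG : forall a1 b1, Rabs (a1 - a0) < e -> Rabs (b1 - b0) < e ->
     continuous (fun q : R * R => g (fst q) (snd q)) (a1, b1)).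
  { intros a1 b1 Ha Hb. apply cont2_of_eps. intros eps Heps.
    destruct (G1 a1 b1 Ha Hb) as [Hg Kg].
    set (x1 := g a1 b1) in *.
    set (ee := Rmin eps (d - Rabs (x1 - x0))).
    assert (Hee' : 0 < ee) by (apply Rmin_pos; lra).
    destruct (LocRoot a1 b1 x1 ee) as [eta [Heta Peta]]; try lra; auto.
    { assert (ee <= d - Rabs (x1 - x0)) by apply Rmin_r. unfold d in *; lra. }
    exists (Rmin eta (Rmin (e - Rabs (a1 - a0)) (e - Rabs (b1 - b0)))).
    split. { repeat apply Rmin_pos; lra. }
    intros a' b' Ha' Hb'.
    assert (A1 : Rabs (a' - a1) < eta) by (eapply Rlt_le_trans; [exact Ha'|apply Rmin_l]).
    assert (B1 : Rabs (b' - b1) < eta) by (eapply Rlt_le_trans; [exact Hb'|apply Rmin_l]).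
    assert (A2 : Rabs (a' - a1) < e - Rabs (a1 - a0)) by (eapply Rlt_le_trans; [exact Ha'|eapply Rle_trans; [apply Rmin_r|apply Rmin_l]]).
    assert (B2 : Rabs (b' - b1) < e - Rabs (b1 - b0)) by (eapply Rlt_le_trans; [exact Hb'|eapply Rle_trans; [apply Rmin_r|apply Rmin_r]]).
    assert (A3 : Rabs (a' - a0) < e) by (pose proof (abs_tri a' a1 a0); lra).
    assert (B3 : Rabs (b' - b0) < e) by (pose proof (abs_tri b' b1 b0); lra).
    destruct (Peta a' b' A1 B1) as [x [Hx Kx']].
    assert (ee <= eps) by apply Rmin_l.
    assert (ee <= d - Rabs (x1 - x0)) by apply Rmin_r.
    rewrite <- (G2 a' b' x A3 B3); [lra | | auto].
    pose proof (abs_tri x x1 x0); lra. }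
  set (Ga := fun a b => - Ka (g a b) a b / Kx (g a b) a b).
  set (Gb := fun a b => - Kb (g a b) a b / Kx (g a b) a b).
  assert (KxPos : forall a b, Rabs (a - a0) < e -> Rabs (b - b0) < e -> 0 < Kx (g a b) a b).
  { intros a b Ha Hb. destruct (G1 a b Ha Hb). apply Pos; unfold d in *; lra. }
  assert (DGa : forall a1 b1, Rabs (a1 - a0) < e -> Rabs (b1 - b0) < e ->
     is_derive (fun t => g t b1) a1 (Ga a1 b1)).
  { intros a1 b1 Ha Hb. unfold Ga.
    apply (impl_deriv (fun x a => K x a b1) (fun x a => Kx x a b1) (fun x a => Ka x a b1) (fun t => g t b1) a1).
    - intros; apply Dx.
    - intros; apply Da.
    - apply cont3_comp2; auto.
    - apply cont3_comp2; auto.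
    - apply Rgt_not_eq, KxPos; auto.
    - apply box1_locally with (e - Rabs (a1 - a0)). lra.
      intros a' Ha'. apply G1; auto. pose proof (abs_tri a' a1 a0); lra.
    - apply (continuous_comp (fun t => (t, b1)) (fun q : R * R => g (fst q) (snd q))).
      apply cont_pair. apply continuous_id. apply cR_const. apply ContG; auto. }
  assert (DGb : forall a1 b1, Rabs (a1 - a0) < e -> Rabs (b1 - b0) < e ->
     is_derive (fun t => g a1 t) b1 (Gb a1 b1)).
  { intros a1 b1 Ha Hb. unfold Gb.
    apply (impl_deriv (fun x b => K x a1 b) (fun x b => Kx x a1 b) (fun x b => Kb x a1 b) (fun t => g a1 t) b1).
    - intros; apply Dx.
    - intros; apply Db.
    - apply cont3_comp3; auto.
    - apply cont3_comp3; auto.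
    - apply Rgt_not_eq, KxPos; auto.
    - apply box1_locally with (e - Rabs (b1 - b0)). lra.
      intros b' Hb'. apply G1; auto. pose proof (abs_tri b' b1 b0); lra.
    - apply (continuous_comp (fun t => (a1, t)) (fun q : R * R => g (fst q) (snd q))).
      apply cont_pair. apply cR_const. apply continuous_id. apply ContG; auto. }
  exists d, e, g. split; [|split; [|split; [|split]]]; auto.
  intros a1 b1 Ha Hb.
  assert (Lbox : locally (a1, b1) (fun q => Rabs (fst q - a0) < e /\ Rabs (snd q - b0) < e)).
  { apply box_locally with (Rmin (e - Rabs (a1 - a0)) (e - Rabs (b1 - b0))).
    apply Rmin_pos; lra. intros a' b' Ha' Hb'. simpl.
    assert (Rmin (e - Rabs (a1 - a0)) (e - Rabs (b1 - b0)) <= e - Rabs (a1 - a0)) by apply Rmin_l.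
    assert (Rmin (e - Rabs (a1 - a0)) (e - Rabs (b1 - b0)) <= e - Rabs (b1 - b0)) by apply Rmin_r.
    pose proof (abs_tri a' a1 a0). pose proof (abs_tri b' b1 b0). split; lra. }
  assert (Cm : continuous (fun q : R * R => (g (fst q) (snd q), (fst q, snd q))) (a1, b1)).
  { apply cont_pair. apply ContG; auto. apply cont_pair; [apply cR_fst | apply cR_snd]. }
  split; [|split; [|split]].
  - eapply filter_imp; [|exact Lbox]. intros [a b] [H1 H2]; simpl in *.
    split; eexists; [apply DGa | apply DGb]; auto.
  - apply ContG; auto.
  - eapply continuous_ext_loc with (g := fun q : R * R => Ga (fst q) (snd q)).
    + eapply filter_imp; [|exact Lbox]. intros [a b] [H1 H2]; simpl in *.
      unfold pdx. symmetry. apply is_derive_unique. apply DGa; auto.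
    + unfold Ga. apply cR_div.
      * apply cR_opp. apply (continuous_comp _ (fun w : R * (R * R) => Ka (fst w) (fst (snd w)) (snd (snd w))) _ Cm).
        apply CKa.
      * apply (continuous_comp _ (fun w : R * (R * R) => Kx (fst w) (fst (snd w)) (snd (snd w))) _ Cm).
        apply CKx.
      * simpl. apply Rgt_not_eq, KxPos; auto.
  - eapply continuous_ext_loc with (g := fun q : R * R => Gb (fst q) (snd q)).
    + eapply filter_imp; [|exact Lbox]. intros [a b] [H1 H2]; simpl in *.
      unfold pdy. symmetry. apply is_derive_unique. apply DGb; auto.
    + unfold Gb. apply cR_div.
      * apply cR_opp. apply (continuous_comp _ (fun w : R * (R * R) => Kb (fst w) (fst (snd w)) (snd (snd w))) _ Cm).
        apply CKb.
      * apply (continuous_comp _ (fun w : R * (R * R) => Kx (fst w) (fst (snd w)) (snd (snd w))) _ Cm).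
        apply CKx.
      * simpl. apply Rgt_not_eq, KxPos; auto.
Qed.

Lemma cont3_opp F : cont3 F -> cont3 (fun x a b => - F x a b).
Proof. intros C x a b. apply cR_opp. apply C. Qed.

Lemma ift (K Kx Ka Kb : R -> R -> R -> R) x0 a0 b0 :
  (forall x a b, is_derive (fun t => K t a b) x (Kx x a b)) ->
  (forall x a b, is_derive (fun t => K x t b) a (Ka x a b)) ->
  (forall x a b, is_derive (fun t => K x a t) b (Kb x a b)) ->
  cont3 K -> cont3 Kx -> cont3 Ka -> cont3 Kb ->
  K x0 a0 b0 = 0 -> Kx x0 a0 b0 <> 0 ->
  exists d e (g : R -> R -> R), 0 < d /\ 0 < e /\
   (forall a b, Rabs (a - a0) < e -> Rabs (b - b0) < e -> Rabs (g a b - x0) < d /\ K (g a b) a b = 0) /\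
   (forall a b x, Rabs (a - a0) < e -> Rabs (b - b0) < e -> Rabs (x - x0) < d -> K x a b = 0 -> x = g a b) /\
   (forall a b, Rabs (a - a0) < e -> Rabs (b - b0) < e -> C1p g (a, b)).
Proof.
  intros Dx Da Db CK CKx CKa CKb K0 N.
  destruct (Rlt_dec 0 (Kx x0 a0 b0)) as [P|P].
  - apply ift_pos with Kx Ka Kb; auto.
  - destruct (ift_pos (fun x a b => - K x a b) (fun x a b => - Kx x a b) (fun x a b => - Ka x a b)
      (fun x a b => - Kb x a b) x0 a0 b0) as [d [e [g [Hd [He [G1 [G2 G3]]]]]]].
    + intros; apply (is_derive_opp (fun t => K t a b)); auto.
    + intros; apply (is_derive_opp (fun t => K x t b)); auto.
    + intros; apply (is_derive_opp (fun t => K x a t)); auto.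
    + now apply cont3_opp.
    + now apply cont3_opp.
    + now apply cont3_opp.
    + now apply cont3_opp.
    + rewrite K0; ring.
    + lra.
    + exists d, e, g. split; [auto|split; [auto|split; [|split]]]; auto.
      * intros a b Ha Hb. split. apply G1; auto.
        assert (HH := proj2 (G1 a b Ha Hb)). simpl in HH. lra.
      * intros a b x Ha Hb Hx Kx'. apply G2; auto. rewrite Kx'; ring.
Qed.


Lemma Dnz p q Phi : Phi <> 0 -> (p <> 0 \/ q <> 0) -> Phi ^ 2 * p ^ 2 + q ^ 2 <> 0.
Proof.
  intros HP [H|H].
  - assert (0 < Phi ^ 2 * p ^ 2) by (apply Rmult_lt_0_compat; apply pow2_gt_0; auto).
    pose proof (pow2_ge_0 q). lra.
  - assert (0 < q ^ 2) by (apply pow2_gt_0; auto). pose proof (pow2_ge_0 (Phi * p)). nra.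
Qed.

Lemma dY h v x Phi : is_sol h v -> Phi ^ 2 * v x ^ 2 + Derive v x ^ 2 <> 0 ->
  is_derive (fun t => ctxY v t Phi) x
   (- 2 * Phi * v x * Derive v x * (Phi ^ 2 - h x) / (Phi ^ 2 * v x ^ 2 + Derive v x ^ 2) ^ 2).
Proof.
  intros S N. assert (N' : (Phi * v x) ^ 2 + Derive v x ^ 2 <> 0) by (rewrite Rpow_mult_distr; auto).
  unfold ctxY. auto_derive.
  - repeat split; auto. apply S. eapply sol_ex2; eauto.
  - eta. rewrite (sol_d2 h v S x). field. auto.
Qed.

Lemma dYP v x Phi : Phi ^ 2 * v x ^ 2 + Derive v x ^ 2 <> 0 ->
  is_derive (fun P => ctxY v x P) Phi
   ((Derive v x ^ 2 - Phi ^ 2 * v x ^ 2) / (Phi ^ 2 * v x ^ 2 + Derive v x ^ 2) ^ 2).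
Proof.
  intros N. assert (N' : (Phi * v x) ^ 2 + Derive v x ^ 2 <> 0) by (rewrite Rpow_mult_distr; auto).
  unfold ctxY. auto_derive; auto. field. auto.
Qed.

Lemma dX h v1 v2 X0 s Wc x Phi : is_sol h v1 -> is_sol h v2 ->
  (forall y, wronsk v1 v2 y = Wc) -> Wc <> 0 ->
  Phi ^ 2 * v1 x ^ 2 + Derive v1 x ^ 2 <> 0 ->
  is_derive (fun t => ctxX v1 v2 X0 s t Phi) x
   (s * (Phi ^ 2 - h x) * (Derive v1 x ^ 2 - Phi ^ 2 * v1 x ^ 2) / (Phi ^ 2 * v1 x ^ 2 + Derive v1 x ^ 2) ^ 2).
Proof.
  intros S1 S2 HW Wn N. assert (N' : (Phi * v1 x) ^ 2 + Derive v1 x ^ 2 <> 0) by (rewrite Rpow_mult_distr; auto).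
  unfold ctxX.
  apply (is_derive_ext (fun t => X0 + s * / Wc * ((Phi ^ 2 * v1 t * v2 t + Derive v1 t * Derive v2 t) /
       (Phi ^ 2 * v1 t ^ 2 + Derive v1 t ^ 2)))).
  { intro t. rewrite HW. reflexivity. }
  auto_derive.
  - repeat split; auto; try apply S1; try apply S2; eapply sol_ex2; eauto.
  - eta. rewrite (sol_d2 h v1 S1 x), (sol_d2 h v2 S2 x).
    rewrite <- (HW x) in Wn |- *. unfold wronsk in *. field. auto.
Qed.

Lemma dXP v1 v2 X0 s x Phi :
  wronsk v1 v2 x <> 0 -> Phi ^ 2 * v1 x ^ 2 + Derive v1 x ^ 2 <> 0 ->
  is_derive (fun P => ctxX v1 v2 X0 s x P) Phi
   (2 * Phi * v1 x * Derive v1 x * s / (Phi ^ 2 * v1 x ^ 2 + Derive v1 x ^ 2) ^ 2).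
Proof.
  intros Wn N. assert (N' : (Phi * v1 x) ^ 2 + Derive v1 x ^ 2 <> 0) by (rewrite Rpow_mult_distr; auto).
  unfold ctxX. auto_derive; auto.
  unfold wronsk in *. field. auto.
Qed.

Lemma nondeg v1 v2 x : wronsk v1 v2 x <> 0 -> v1 x <> 0 \/ Derive v1 x <> 0.
Proof.
  intro W. destruct (Req_dec (v1 x) 0) as [Z|Z]; auto. right. intro Z'.
  apply W. unfold wronsk. rewrite Z, Z'. ring.
Qed.

Lemma pullback h v1 v2 X0 s Wc : is_sol h v1 -> is_sol h v2 ->
  (forall y, wronsk v1 v2 y = Wc) -> Wc <> 0 -> (s = 1 \/ s = -1) ->
  pullback_gH_is_gh h (Dom h) (ctxX v1 v2 X0 s) (ctxY v1).
Proof.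
  intros S1 S2 HW Wn Hs x Phi [HP HPh].
  assert (Wx : wronsk v1 v2 x <> 0) by (rewrite HW; auto).
  assert (N : Phi ^ 2 * v1 x ^ 2 + Derive v1 x ^ 2 <> 0) by (apply Dnz; [lra | apply (nondeg v1 v2); auto]).
  assert (Dp : 0 < Phi ^ 2 * v1 x ^ 2 + Derive v1 x ^ 2).
  { pose proof (pow2_ge_0 (Phi * v1 x)). pose proof (pow2_ge_0 (Derive v1 x)).
    rewrite Rpow_mult_distr in *. lra. }
  assert (E1 : pdx (ctxX v1 v2 X0 s) x Phi = s * (Phi ^ 2 - h x) * (Derive v1 x ^ 2 - Phi ^ 2 * v1 x ^ 2) / (Phi ^ 2 * v1 x ^ 2 + Derive v1 x ^ 2) ^ 2)
    by (apply is_derive_unique; apply (dX h v1 v2 X0 s Wc x Phi S1 S2 HW Wn N)).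
  assert (E2 : pdy (ctxX v1 v2 X0 s) x Phi = 2 * Phi * v1 x * Derive v1 x * s / (Phi ^ 2 * v1 x ^ 2 + Derive v1 x ^ 2) ^ 2)
    by (apply is_derive_unique; apply (dXP v1 v2 X0 s x Phi Wx N)).
  assert (E3 : pdx (ctxY v1) x Phi = - 2 * Phi * v1 x * Derive v1 x * (Phi ^ 2 - h x) / (Phi ^ 2 * v1 x ^ 2 + Derive v1 x ^ 2) ^ 2)
    by (apply is_derive_unique; apply (dY h v1 x Phi S1 N)).
  assert (E4 : pdy (ctxY v1) x Phi = (Derive v1 x ^ 2 - Phi ^ 2 * v1 x ^ 2) / (Phi ^ 2 * v1 x ^ 2 + Derive v1 x ^ 2) ^ 2)
    by (apply is_derive_unique; apply (dYP v1 x Phi N)).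
  rewrite E1, E2, E3, E4.
  unfold ctxY.
  split; [apply Rdiv_lt_0_compat; auto|].
  destruct Hs; subst s; repeat split; field; split; lra.
Qed.

Lemma cont_sol h v y : is_sol h v -> continuous v y.
Proof. intro S. exact (ex_derive_continuous v y (proj1 (S y))). Qed.
Lemma cont_solD h v y : is_sol h v -> continuous (Derive v) y.
Proof. intro S. exact (ex_derive_continuous (Derive v) y (sol_ex2 h v S y)). Qed.

Lemma C1p_sol h v p : is_sol h v -> C1p (fun x _ => v x) p.
Proof.
  intro S. apply (C1p_fun1 v (Derive v)). intro; eapply sol_d1; eauto.
  intro; eapply cont_solD; eauto.
Qed.

Lemma C1p_solD h v p : (forall x, continuous h x) -> is_sol h v -> C1p (fun x _ => Derive v x) p.
Proof.
  intros hc S. apply (C1p_fun1 (Derive v) (fun y => - h y * v y)). intro; apply S.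
  intro y. apply cR_mult. apply cR_opp. apply hc. eapply cont_sol; eauto.
Qed.

Lemma C1p_wr v1 v2 Wc p : (forall y, wronsk v1 v2 y = Wc) -> C1p (fun x _ => wronsk v1 v2 x) p.
Proof.
  intro HW. apply (C1p_ext (fun _ _ => Wc)). apply C1p_const. intros; auto.
Qed.

Ltac c1step h := match goal with
 | |- C1p (fun x y => @?A x y - @?B x y) _ => apply (C1p_minus A B)
 | |- C1p (fun x y => @?A x y + @?B x y) _ => apply (C1p_plus A B)
 | |- C1p (fun x y => @?A x y / @?B x y) _ => apply (C1p_div A B)
 | |- C1p (fun x y => @?A x y * @?B x y) _ => apply (C1p_mult A B)
 | |- C1p (fun x y => / @?A x y) _ => apply (C1p_inv A)
 | |- C1p (fun x y => - @?A x y) _ => apply (C1p_opp A)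
 | |- C1p (fun x y => @?A x y ^ ?n) _ => apply (C1p_pow A n)
 | |- C1p (fun x y => x) _ => apply C1p_fst
 | |- C1p (fun x y => y) _ => apply C1p_snd
 | |- C1p (fun x y => Derive ?v x) _ => apply (C1p_solD h v)
 | |- C1p (fun x y => wronsk ?a ?b x) _ => eapply (C1p_wr a b)
 | |- C1p (fun x y => ?v x) _ => apply (C1p_sol h v)
 | |- C1p (fun x y => ?c) _ => apply C1p_const
 end.
Lemma C1p_X h v1 v2 X0 s Wc p : (forall x, continuous h x) -> is_sol h v1 -> is_sol h v2 ->
  (forall y, wronsk v1 v2 y = Wc) -> Wc <> 0 -> snd p <> 0 -> C1p (ctxX v1 v2 X0 s) p.
Proof.
  intros hc S1 S2 HW Wn Hp. unfold ctxX.
  repeat (c1step h); auto.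
  - rewrite HW; auto.
  - apply Dnz; auto. apply (nondeg v1 v2). rewrite HW; auto.
Qed.

Lemma C1p_Y h v1 v2 Wc p : (forall x, continuous h x) -> is_sol h v1 ->
  (forall y, wronsk v1 v2 y = Wc) -> Wc <> 0 -> snd p <> 0 -> C1p (ctxY v1) p.
Proof.
  intros hc S1 HW Wn Hp. unfold ctxY.
  repeat (c1step h); auto.
  apply Dnz; auto. apply (nondeg v1 v2). rewrite HW; auto.
Qed.


Ltac fld := field; repeat split; try rewrite Rpow_mult_distr; auto.

Lemma alg_K p q r t Phi W X0 s : W = q * r - p * t -> W <> 0 -> Phi <> 0 ->
  Phi ^ 2 * p ^ 2 + q ^ 2 <> 0 -> (s = 1 \/ s = -1) ->
  let a := s * W * (X0 + s * / W * ((Phi ^ 2 * p * r + q * t) / (Phi ^ 2 * p ^ 2 + q ^ 2))) + - (s * W * X0) in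
  let b := W * (Phi / (Phi ^ 2 * p ^ 2 + q ^ 2)) + 0 in
  a = (Phi ^ 2 * p * r + q * t) / (Phi ^ 2 * p ^ 2 + q ^ 2) /\
  (a * p - r) * (a * q - t) + b ^ 2 * p * q = 0.
Proof.
  intros HW Wn Pn Dn Hs a b.
  assert (Ha : a = (Phi ^ 2 * p * r + q * t) / (Phi ^ 2 * p ^ 2 + q ^ 2)).
  { unfold a. destruct Hs; subst s; fld. }
  split; auto. unfold b. rewrite Ha, HW. fld.
Qed.

Lemma alg_Kx p q r t Phi W X0 s hx : W = q * r - p * t -> W <> 0 -> Phi <> 0 ->
  Phi ^ 2 * p ^ 2 + q ^ 2 <> 0 -> (s = 1 \/ s = -1) -> Phi ^ 2 - hx <> 0 ->
  let a := s * W * (X0 + s * / W * ((Phi ^ 2 * p * r + q * t) / (Phi ^ 2 * p ^ 2 + q ^ 2))) + - (s * W * X0) in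
  let b := W * (Phi / (Phi ^ 2 * p ^ 2 + q ^ 2)) + 0 in
  (a * q - t) ^ 2 - hx * (a * p - r) ^ 2 + b ^ 2 * (q ^ 2 - hx * p ^ 2) <> 0.
Proof.
  intros HW Wn Pn Dn Hs Hh a b.
  destruct (alg_K p q r t Phi W X0 s HW Wn Pn Dn Hs) as [Ha _]. fold a in Ha.
  replace ((a * q - t) ^ 2 - hx * (a * p - r) ^ 2 + b ^ 2 * (q ^ 2 - hx * p ^ 2))
    with (W ^ 2 * (Phi ^ 2 - hx) / (Phi ^ 2 * p ^ 2 + q ^ 2)).
  - unfold Rdiv. apply Rmult_integral_contrapositive_currified.
    apply Rmult_integral_contrapositive_currified. apply pow_nonzero; auto. auto.
    apply Rinv_neq_0_compat; auto.
  - unfold b. rewrite Ha, HW. fld.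
Qed.

Lemma alg_G2 p q r t Phi W X0 s : W = q * r - p * t -> W <> 0 -> Phi <> 0 ->
  Phi ^ 2 * p ^ 2 + q ^ 2 <> 0 -> (s = 1 \/ s = -1) ->
  let a := s * W * (X0 + s * / W * ((Phi ^ 2 * p * r + q * t) / (Phi ^ 2 * p ^ 2 + q ^ 2))) + - (s * W * X0) in
  let b := W * (Phi / (Phi ^ 2 * p ^ 2 + q ^ 2)) + 0 in
  b * W / (b ^ 2 * p ^ 2 + (a * p - r) ^ 2) = Phi.
Proof.
  intros HW Wn Pn Dn Hs a b.
  destruct (alg_K p q r t Phi W X0 s HW Wn Pn Dn Hs) as [Ha _]. fold a in Ha.
  assert (E : b ^ 2 * p ^ 2 + (a * p - r) ^ 2 = W ^ 2 / (Phi ^ 2 * p ^ 2 + q ^ 2)).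
  { unfold b. rewrite Ha, HW. fld. }
  rewrite E. unfold b. fld.
Qed.

Lemma alg_inv p q r t a b Phi W X0 s Xw Yw : W = q * r - p * t -> W <> 0 -> Phi <> 0 ->
  Phi ^ 2 * p ^ 2 + q ^ 2 <> 0 -> (s = 1 \/ s = -1) ->
  (a * p - r) * (a * q - t) + b ^ 2 * p * q = 0 ->
  b ^ 2 * p ^ 2 + (a * p - r) ^ 2 <> 0 ->
  Phi = b * W / (b ^ 2 * p ^ 2 + (a * p - r) ^ 2) ->
  a = s * W * Xw + - (s * W * X0) -> b = W * Yw + 0 ->
  X0 + s * / W * ((Phi ^ 2 * p * r + q * t) / (Phi ^ 2 * p ^ 2 + q ^ 2)) = Xw /\
  Phi / (Phi ^ 2 * p ^ 2 + q ^ 2) = Yw.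
Proof.
  intros HW Wn Pn Dn Hs K den HP Ha Hb.
  set (dd := b ^ 2 * p ^ 2 + (a * p - r) ^ 2) in *.
  assert (E1 : a * q - t - b * Phi * p = 0).
  { assert ((a * q - t - b * Phi * p) * dd = (a * p - r) * ((a * p - r) * (a * q - t) + b ^ 2 * p * q)).
    { rewrite HP. unfold dd. rewrite HW. fld. }
    rewrite K, Rmult_0_r in H. apply Rmult_integral in H. destruct H; auto. contradiction. }
  assert (E2 : a * Phi * p - Phi * r + b * q = 0).
  { assert ((a * Phi * p - Phi * r + b * q) * dd = b * p * ((a * p - r) * (a * q - t) + b ^ 2 * p * q)).
    { rewrite HP. unfold dd. rewrite HW. fld. }
    rewrite K, Rmult_0_r in H. apply Rmult_integral in H. destruct H; auto. contradiction. }
  assert (N1 : Phi ^ 2 * p * r + q * t = a * (Phi ^ 2 * p ^ 2 + q ^ 2)).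
  { assert (Phi ^ 2 * p * r + q * t - a * (Phi ^ 2 * p ^ 2 + q ^ 2) =
       - Phi * p * (a * Phi * p - Phi * r + b * q) - q * (a * q - t - b * Phi * p)) by ring.
    rewrite E1, E2 in H. lra. }
  assert (N2 : Phi * W = b * (Phi ^ 2 * p ^ 2 + q ^ 2)).
  { rewrite HW.
    assert (Phi * (q * r - p * t) - b * (Phi ^ 2 * p ^ 2 + q ^ 2) =
       Phi * p * (a * q - t - b * Phi * p) - q * (a * Phi * p - Phi * r + b * q)) by ring.
    rewrite E1, E2 in H. lra. }
  split.
  - rewrite N1. replace (a * (Phi ^ 2 * p ^ 2 + q ^ 2) / (Phi ^ 2 * p ^ 2 + q ^ 2)) with a by (fld).
    rewrite Ha. destruct Hs; subst s; fld.
  - apply (Rmult_eq_reg_l W); auto.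
    replace (W * (Phi / (Phi ^ 2 * p ^ 2 + q ^ 2))) with (Phi * W / (Phi ^ 2 * p ^ 2 + q ^ 2)) by (fld).
    rewrite N2. field_simplify; auto. rewrite Hb. ring.
  rewrite Rpow_mult_distr; auto.
Qed.


Definition KK v1 v2 (x a b : R) := (a * v1 x - v2 x) * (a * Derive v1 x - Derive v2 x) + b ^ 2 * v1 x * Derive v1 x.
Definition KKx (h : R -> R) v1 v2 (x a b : R) := (a * Derive v1 x - Derive v2 x) ^ 2 - h x * (a * v1 x - v2 x) ^ 2 + b ^ 2 * (Derive v1 x ^ 2 - h x * v1 x ^ 2).
Definition KKa v1 v2 (x a b : R) := v1 x * (a * Derive v1 x - Derive v2 x) + (a * v1 x - v2 x) * Derive v1 x.
Definition KKb v1 (x a b : R) := 2 * b * v1 x * Derive v1 x.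

Lemma loc_pre {T : UniformSpace} (F : T -> R) (O : R -> Prop) p :
  continuous F p -> open O -> O (F p) -> locally p (fun q => O (F q)).
Proof. intros C HO H. exact (C _ (HO _ H)). Qed.

Ltac c3 h := match goal with
 | |- continuous (fun w => @?A w - @?B w) _ => apply (cR_minus A B)
 | |- continuous (fun w => @?A w + @?B w) _ => apply (cR_plus A B)
 | |- continuous (fun w => @?A w * @?B w) _ => apply (cR_mult A B)
 | |- continuous (fun w => - @?A w) _ => apply (cR_opp A)
 | |- continuous (fun w => @?A w ^ ?n) _ => apply (cR_pow A n)
 | |- continuous (fun w => fst (snd w)) _ =>
     apply (continuous_comp (fun w => snd w) (fun v => fst v)); [apply cR_snd | apply cR_fst]
 | |- continuous (fun w => snd (snd w)) _ =>
     apply (continuous_comp (fun w => snd w) (fun v => snd v)); [apply cR_snd | apply cR_snd]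
 | |- continuous (fun w => Derive ?v (fst w)) _ =>
     apply (cR_comp (fun w => fst w) (Derive v)); [apply cR_fst | eapply cont_solD; eauto]
 | |- continuous (fun w => h (fst w)) _ =>
     apply (cR_comp (fun w => fst w) h); [apply cR_fst | auto]
 | |- continuous (fun w => ?v (fst w)) _ =>
     apply (cR_comp (fun w => fst w) v); [apply cR_fst | eapply cont_sol; eauto]
 | |- continuous (fun w => ?c) _ => apply cR_const
 end.

Lemma KK_props h v1 v2 : (forall x, continuous h x) -> is_sol h v1 -> is_sol h v2 ->
  (forall x a b, is_derive (fun t => KK v1 v2 t a b) x (KKx h v1 v2 x a b)) /\
  (forall x a b, is_derive (fun t => KK v1 v2 x t b) a (KKa v1 v2 x a b)) /\
  (forall x a b, is_derive (fun t => KK v1 v2 x a t) b (KKb v1 x a b)) /\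
  cont3 (KK v1 v2) /\ cont3 (KKx h v1 v2) /\ cont3 (KKa v1 v2) /\ cont3 (KKb v1).
Proof.
  intros hc S1 S2. split; [|split; [|split; [|split; [|split; [|split]]]]].
  - intros x a b. unfold KK, KKx. auto_derive.
    + repeat split; try apply S1; try apply S2; eapply sol_ex2; eauto.
    + eta. rewrite (sol_d2 h v1 S1 x), (sol_d2 h v2 S2 x). ring.
  - intros x a b. unfold KK, KKa. auto_derive; auto. ring.
  - intros x a b. unfold KK, KKb. auto_derive; auto. ring.
  - intros x a b. unfold KK. repeat c3 h.
  - intros x a b. unfold KKx. repeat c3 h.
  - intros x a b. unfold KKa. repeat c3 h.
  - intros x a b. unfold KKb. repeat c3 h.
Qed.

Lemma local_diffeo_main h v1 v2 X0 s Wc : (forall x, continuous h x) -> is_sol h v1 -> is_sol h v2 ->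
  (forall y, wronsk v1 v2 y = Wc) -> Wc <> 0 -> (s = 1 \/ s = -1) ->
  local_diffeo (Dom h) (ctxX v1 v2 X0 s) (ctxY v1).
Proof.
  intros hc S1 S2 HW Wn Hs x0 P0 [HP0 HPh0].
  assert (Wq : forall x, Wc = Derive v1 x * v2 x - v1 x * Derive v2 x) by (intro x; rewrite <- (HW x); reflexivity).
  assert (Dn : forall x Phi, Phi <> 0 -> Phi ^ 2 * v1 x ^ 2 + Derive v1 x ^ 2 <> 0).
  { intros. apply Dnz; auto. apply (nondeg v1 v2). rewrite HW; auto. }
  set (al := fun X => s * Wc * X + - (s * Wc * X0)).
  set (be := fun Y => Wc * Y + 0).
  assert (FK : forall x Phi, Phi <> 0 -> KK v1 v2 x (al (ctxX v1 v2 X0 s x Phi)) (be (ctxY v1 x Phi)) = 0).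
  { intros x Phi HP. unfold KK, al, be, ctxX, ctxY. rewrite HW.
    exact (proj2 (alg_K (v1 x) (Derive v1 x) (v2 x) (Derive v2 x) Phi Wc X0 s (Wq x) Wn HP (Dn x Phi HP) Hs)). }
  assert (FKx : forall x Phi, Phi <> 0 -> Phi ^ 2 - h x <> 0 ->
     KKx h v1 v2 x (al (ctxX v1 v2 X0 s x Phi)) (be (ctxY v1 x Phi)) <> 0).
  { intros x Phi HP Hh. unfold KKx, al, be, ctxX, ctxY. rewrite HW.
    exact (alg_Kx (v1 x) (Derive v1 x) (v2 x) (Derive v2 x) Phi Wc X0 s (h x) (Wq x) Wn HP (Dn x Phi HP) Hs Hh). }
  assert (FG : forall x Phi, Phi <> 0 ->
     be (ctxY v1 x Phi) * Wc / (be (ctxY v1 x Phi) ^ 2 * v1 x ^ 2 + (al (ctxX v1 v2 X0 s x Phi) * v1 x - v2 x) ^ 2) = Phi).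
  { intros x Phi HP. unfold al, be, ctxX, ctxY. rewrite HW.
    exact (alg_G2 (v1 x) (Derive v1 x) (v2 x) (Derive v2 x) Phi Wc X0 s (Wq x) Wn HP (Dn x Phi HP) Hs). }
  set (a0 := al (ctxX v1 v2 X0 s x0 P0)).
  set (b0 := be (ctxY v1 x0 P0)).
  destruct (KK_props h v1 v2 hc S1 S2) as [D1 [D2 [D3 [C1 [C2 [C3 C4]]]]]].
  destruct (ift (KK v1 v2) (KKx h v1 v2) (KKa v1 v2) (KKb v1) x0 a0 b0 D1 D2 D3 C1 C2 C3 C4)
    as [d [e [g [Hd [He [G1 [G2 G3]]]]]]].
  { apply FK; lra. }
  { apply FKx; lra. }
  set (G1f := fun X Y => g (s * Wc * X + - (s * Wc * X0)) (Wc * Y + 0)).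
  set (G2f := fun X Y => (Wc * Y + 0) * Wc / ((Wc * Y + 0) ^ 2 * v1 (G1f X Y) ^ 2 +
      ((s * Wc * X + - (s * Wc * X0)) * v1 (G1f X Y) - v2 (G1f X Y)) ^ 2)).
  assert (CG1 : forall X Y, Rabs (al X - a0) < e -> Rabs (be Y - b0) < e -> C1p G1f (X, Y)).
  { intros X Y HX HY. apply (C1p_aff g (s * Wc) (- (s * Wc * X0)) Wc 0 X Y). apply G3; auto. }
  assert (CG2 : forall X Y, Rabs (al X - a0) < e -> Rabs (be Y - b0) < e ->
     ((Wc * Y + 0) ^ 2 * v1 (G1f X Y) ^ 2 + ((s * Wc * X + - (s * Wc * X0)) * v1 (G1f X Y) - v2 (G1f X Y)) ^ 2) <> 0 ->
     C1p G2f (X, Y)).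
  { intros X Y HX HY HD. unfold G2f.
    repeat (match goal with
      | |- C1p (fun x y => ?v (G1f x y)) _ => apply (C1p_comp1 v (Derive v) G1f)
      end || c1step h); auto.
    all: first [apply filter_forall; intro; eapply sol_d1; eauto | eapply cont_solD; eauto]. }
  set (V := fun p : R * R => Rabs (fst p - x0) < d /\ 0 < snd p /\ snd p ^ 2 - h (fst p) <> 0 /\
     Rabs (al (ctxX v1 v2 X0 s (fst p) (snd p)) - a0) < e /\ Rabs (be (ctxY v1 (fst p) (snd p)) - b0) < e).
  set (W := fun w : R * R => Rabs (al (fst w) - a0) < e /\ Rabs (be (snd w) - b0) < e /\
     0 < G2f (fst w) (snd w) /\ G2f (fst w) (snd w) ^ 2 - h (G1f (fst w) (snd w)) <> 0).
  assert (VW : forall p, V p -> W (ctxX v1 v2 X0 s (fst p) (snd p), ctxY v1 (fst p) (snd p)) /\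
      G1f (ctxX v1 v2 X0 s (fst p) (snd p)) (ctxY v1 (fst p) (snd p)) = fst p /\
      G2f (ctxX v1 v2 X0 s (fst p) (snd p)) (ctxY v1 (fst p) (snd p)) = snd p).
  { intros [x Phi] [V1 [V2 [V3 [V4 V5]]]]. simpl in *.
    assert (E1 : G1f (ctxX v1 v2 X0 s x Phi) (ctxY v1 x Phi) = x).
    { symmetry. apply (G2 _ _ x V4 V5 V1). apply FK; lra. }
    assert (E2 : G2f (ctxX v1 v2 X0 s x Phi) (ctxY v1 x Phi) = Phi).
    { unfold G2f. rewrite E1. apply FG. lra. }
    split; [|split]; auto. unfold W; simpl. rewrite E1, E2. repeat split; auto. }
  assert (WV : forall w, W w -> V (G1f (fst w) (snd w), G2f (fst w) (snd w)) /\
      ctxX v1 v2 X0 s (G1f (fst w) (snd w)) (G2f (fst w) (snd w)) = fst w /\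
      ctxY v1 (G1f (fst w) (snd w)) (G2f (fst w) (snd w)) = snd w).
  { intros [Xw Yw] [W1 [W2 [W3 W4]]]. cbn [fst snd] in *.
    destruct (G1 (al Xw) (be Yw) W1 W2) as [Gd GK].
    change (g (al Xw) (be Yw)) with (G1f Xw Yw) in Gd, GK.
    assert (den : (Wc * Yw + 0) ^ 2 * v1 (G1f Xw Yw) ^ 2 +
      ((s * Wc * Xw + - (s * Wc * X0)) * v1 (G1f Xw Yw) - v2 (G1f Xw Yw)) ^ 2 <> 0).
    { intro Z. unfold G2f in W3. cbv beta in W3. rewrite Z in W3. unfold Rdiv in W3. rewrite Rinv_0, Rmult_0_r in W3. lra. }
    set (x := G1f Xw Yw) in *. set (Phi := G2f Xw Yw) in *.
    destruct (alg_inv (v1 x) (Derive v1 x) (v2 x) (Derive v2 x) (al Xw) (be Yw) Phi Wc X0 s Xw Yw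
      (Wq x) Wn ltac:(lra) (Dn x Phi ltac:(lra)) Hs GK den eq_refl eq_refl eq_refl) as [E1 E2].
    assert (EX : ctxX v1 v2 X0 s x Phi = Xw) by (unfold ctxX; rewrite HW; exact E1).
    assert (EY : ctxY v1 x Phi = Yw) by exact E2.
    split; [|split]; auto. unfold V; simpl. rewrite EX, EY. repeat split; auto. }
  assert (denW : forall X Y, 0 < G2f X Y -> (Wc * Y + 0) ^ 2 * v1 (G1f X Y) ^ 2 +
      ((s * Wc * X + - (s * Wc * X0)) * v1 (G1f X Y) - v2 (G1f X Y)) ^ 2 <> 0).
  { intros X Y W3 Z. unfold G2f in W3. cbv beta in W3. rewrite Z in W3. unfold Rdiv in W3.
    rewrite Rinv_0, Rmult_0_r in W3. lra. }
  assert (Cal : forall p : R * R, continuous (fun q : R * R => al (fst q)) p).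
  { intro p. unfold al. apply cR_plus; [apply cR_mult; [apply cR_const | apply cR_fst] | apply cR_const]. }
  assert (Cbe : forall p : R * R, continuous (fun q : R * R => be (snd q)) p).
  { intro p. unfold be. apply cR_plus; [apply cR_mult; [apply cR_const | apply cR_snd] | apply cR_const]. }
  exists V, W, G1f, G2f.
  split; [|split; [|split; [|split; [|split; [|split; [|split; [|split; [|split]]]]]]]].
  - intros [x Phi] [V1 [V2 [V3 [V4 V5]]]]. cbn [fst snd] in *.
    assert (HP : snd (x, Phi) <> 0) by (simpl; lra).
    assert (L1 := loc_pre (fun q : R * R => Rabs (fst q - x0)) (fun y => y < d) (x, Phi)
      ltac:(apply (cR_comp (fun q : R * R => fst q - x0) Rabs); [apply cR_minus; [apply cR_fst|apply cR_const] | apply cR_abs])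
      (open_lt d) V1).
    assert (L2 := loc_pre (fun q : R * R => snd q) (fun y => 0 < y) (x, Phi) (cR_snd _) (open_gt 0) V2).
    assert (L3 := loc_pre (fun q : R * R => snd q ^ 2 - h (fst q)) (fun y => y <> 0) (x, Phi)
      ltac:(apply cR_minus; [apply cR_pow, cR_snd | apply (cR_comp (fun q : R * R => fst q) h); [apply cR_fst | apply hc]])
      (open_neq 0) V3).
    assert (L4 := loc_pre (fun q : R * R => Rabs (al (ctxX v1 v2 X0 s (fst q) (snd q)) - a0)) (fun y => y < e) (x, Phi)
      ltac:(apply (cR_comp (fun q : R * R => al (ctxX v1 v2 X0 s (fst q) (snd q)) - a0) Rabs); [|apply cR_abs];
            apply cR_minus; [|apply cR_const]; unfold al; apply cR_plus; [|apply cR_const];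
            apply cR_mult; [apply cR_const|]; apply C1p_cont; apply (C1p_X h v1 v2 X0 s Wc); auto)
      (open_lt e) V4).
    assert (L5 := loc_pre (fun q : R * R => Rabs (be (ctxY v1 (fst q) (snd q)) - b0)) (fun y => y < e) (x, Phi)
      ltac:(apply (cR_comp (fun q : R * R => be (ctxY v1 (fst q) (snd q)) - b0) Rabs); [|apply cR_abs];
            apply cR_minus; [|apply cR_const]; unfold be; apply cR_plus; [|apply cR_const];
            apply cR_mult; [apply cR_const|]; apply C1p_cont; apply (C1p_Y h v1 v2 Wc); auto)
      (open_lt e) V5).
    eapply filter_imp; [| exact (filter_and _ _ L1 (filter_and _ _ L2 (filter_and _ _ L3 (filter_and _ _ L4 L5))))].
    intros q Q. exact Q.
  - intros [Xw Yw] [W1 [W2 [W3 W4]]]. cbn [fst snd] in *.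
    assert (CG2' := C1p_cont _ _ (CG2 Xw Yw W1 W2 (denW Xw Yw W3))).
    assert (CG1' := C1p_cont _ _ (CG1 Xw Yw W1 W2)).
    assert (L1 := loc_pre (fun q : R * R => Rabs (al (fst q) - a0)) (fun y => y < e) (Xw, Yw)
      ltac:(apply (cR_comp (fun q : R * R => al (fst q) - a0) Rabs); [apply cR_minus; [apply Cal|apply cR_const] | apply cR_abs])
      (open_lt e) W1).
    assert (L2 := loc_pre (fun q : R * R => Rabs (be (snd q) - b0)) (fun y => y < e) (Xw, Yw)
      ltac:(apply (cR_comp (fun q : R * R => be (snd q) - b0) Rabs); [apply cR_minus; [apply Cbe|apply cR_const] | apply cR_abs])
      (open_lt e) W2).
    assert (L3 := loc_pre (fun q : R * R => G2f (fst q) (snd q)) (fun y => 0 < y) (Xw, Yw) CG2' (open_gt 0) W3).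
    assert (L4 := loc_pre (fun q : R * R => G2f (fst q) (snd q) ^ 2 - h (G1f (fst q) (snd q))) (fun y => y <> 0) (Xw, Yw)
      ltac:(apply cR_minus; [apply cR_pow; exact CG2' | apply (cR_comp (fun q : R * R => G1f (fst q) (snd q)) h); [exact CG1' | apply hc]])
      (open_neq 0) W4).
    eapply filter_imp; [| exact (filter_and _ _ L1 (filter_and _ _ L2 (filter_and _ _ L3 L4)))].
    intros q Q. exact Q.
  - unfold V; cbn [fst snd]. rewrite Rminus_eq_0, Rabs_R0. fold a0 b0. rewrite !Rminus_eq_0, Rabs_R0.
    repeat split; auto; lra.
  - intros p [V1 [V2 [V3 _]]]. split; auto. lra.
  - exact VW.
  - exact WV.
  - apply C1p_C1_on. intros p [_ [V2 _]]. apply (C1p_X h v1 v2 X0 s Wc); auto. lra.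
  - apply C1p_C1_on. intros p [_ [V2 _]]. apply (C1p_Y h v1 v2 Wc); auto. lra.
  - apply C1p_C1_on. intros [Xw Yw] [W1 [W2 _]]. apply CG1; auto.
  - apply C1p_C1_on. intros [Xw Yw] [W1 [W2 [W3 _]]]. apply CG2; auto.
Qed.


Lemma alg_rank p q Phi k m n : Phi <> 0 -> k <> 0 -> (p <> 0 \/ q <> 0) ->
  let D := Phi ^ 2 * p ^ 2 + q ^ 2 in
  (- 2 * Phi ^ 3 * p / D ^ 2) * m + (- 2 * Phi * q / D ^ 2) * n = 0 ->
  (2 * Phi * k * q * (q ^ 2 - 3 * Phi ^ 2 * p ^ 2) / D ^ 3) * m + (2 * Phi * k * p * (Phi ^ 2 * p ^ 2 - 3 * q ^ 2) / D ^ 3) * n = 0 ->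
  (- 2 * Phi ^ 2 * p * (3 * q ^ 2 - Phi ^ 2 * p ^ 2) / D ^ 3) * m + (2 * q * (3 * Phi ^ 2 * p ^ 2 - q ^ 2) / D ^ 3) * n = 0 ->
  m = 0 /\ n = 0.
Proof.
  intros HP Hk Hpq D E1 E2 E3.
  assert (Dn : D <> 0) by (apply Dnz; auto).
  assert (e1 : Phi ^ 2 * p * m + q * n = 0).
  { assert (H : (- 2 * Phi ^ 3 * p / D ^ 2) * m + (- 2 * Phi * q / D ^ 2) * n = (- 2 * Phi / D ^ 2) * (Phi ^ 2 * p * m + q * n))
      by (field; auto).
    rewrite H in E1. apply Rmult_integral in E1. destruct E1 as [E|E]; auto.
    exfalso. unfold Rdiv in E. apply Rmult_integral in E. destruct E as [E|E].
    - apply HP. lra.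
    - apply (Rinv_neq_0_compat (D ^ 2)); auto. apply pow_nonzero; auto. }
  assert (e2 : q * (q ^ 2 - 3 * Phi ^ 2 * p ^ 2) * m + p * (Phi ^ 2 * p ^ 2 - 3 * q ^ 2) * n = 0).
  { assert (H : (2 * Phi * k * q * (q ^ 2 - 3 * Phi ^ 2 * p ^ 2) / D ^ 3) * m + (2 * Phi * k * p * (Phi ^ 2 * p ^ 2 - 3 * q ^ 2) / D ^ 3) * n
       = (2 * Phi * k / D ^ 3) * (q * (q ^ 2 - 3 * Phi ^ 2 * p ^ 2) * m + p * (Phi ^ 2 * p ^ 2 - 3 * q ^ 2) * n))
      by (field; auto).
    rewrite H in E2. apply Rmult_integral in E2. destruct E2 as [E|E]; auto.
    exfalso. unfold Rdiv in E. apply Rmult_integral in E. destruct E as [E|E].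
    - apply Rmult_integral in E. destruct E as [E|E]; [apply Rmult_integral in E; destruct E|]; lra.
    - apply (Rinv_neq_0_compat (D ^ 3)); auto. apply pow_nonzero; auto. }
  assert (e3 : - Phi ^ 2 * p * (3 * q ^ 2 - Phi ^ 2 * p ^ 2) * m + q * (3 * Phi ^ 2 * p ^ 2 - q ^ 2) * n = 0).
  { assert (H : (- 2 * Phi ^ 2 * p * (3 * q ^ 2 - Phi ^ 2 * p ^ 2) / D ^ 3) * m + (2 * q * (3 * Phi ^ 2 * p ^ 2 - q ^ 2) / D ^ 3) * n
       = (2 / D ^ 3) * (- Phi ^ 2 * p * (3 * q ^ 2 - Phi ^ 2 * p ^ 2) * m + q * (3 * Phi ^ 2 * p ^ 2 - q ^ 2) * n))
      by (field; auto).
    rewrite H in E3. apply Rmult_integral in E3. destruct E3 as [E|E]; auto.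
    exfalso. unfold Rdiv in E. apply Rmult_integral in E. destruct E as [E|E].
    - lra.
    - apply (Rinv_neq_0_compat (D ^ 3)); auto. apply pow_nonzero; auto. }
  assert (Z1 : m * ((q ^ 2 - Phi ^ 2 * p ^ 2) * D) = 0).
  { unfold D. replace (m * ((q ^ 2 - Phi ^ 2 * p ^ 2) * (Phi ^ 2 * p ^ 2 + q ^ 2))) with
      (q * (q * (q ^ 2 - 3 * Phi ^ 2 * p ^ 2) * m + p * (Phi ^ 2 * p ^ 2 - 3 * q ^ 2) * n)
       - p * (Phi ^ 2 * p ^ 2 - 3 * q ^ 2) * (Phi ^ 2 * p * m + q * n)) by ring.
    rewrite e1, e2. ring. }
  assert (Z2 : Phi ^ 2 * p * q * m * D = 0).
  { unfold D. replace (Phi ^ 2 * p * q * m * (Phi ^ 2 * p ^ 2 + q ^ 2)) with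
      (- / 2 * (q * (- Phi ^ 2 * p * (3 * q ^ 2 - Phi ^ 2 * p ^ 2) * m + q * (3 * Phi ^ 2 * p ^ 2 - q ^ 2) * n)
       - (3 * Phi ^ 2 * p ^ 2 - q ^ 2) * q * (Phi ^ 2 * p * m + q * n))) by field.
    rewrite e1, e3. ring. }
  assert (Z1' : m * (q ^ 2 - Phi ^ 2 * p ^ 2) = 0).
  { rewrite <- Rmult_assoc in Z1. apply Rmult_integral in Z1. destruct Z1; auto. contradiction. }
  assert (Z2' : p * q * m = 0).
  { apply Rmult_integral in Z2. destruct Z2 as [Z|Z]; [|contradiction].
    replace (Phi ^ 2 * p * q * m) with (Phi ^ 2 * (p * q * m)) in Z by ring.
    apply Rmult_integral in Z. destruct Z as [Z|Z]; auto. exfalso. apply (pow_nonzero Phi 2 HP Z). }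
  assert (P2 : 0 < Phi ^ 2) by (apply pow2_gt_0; auto).
  assert (Hm : m = 0).
  { destruct (Req_dec m 0) as [M|M]; auto. exfalso.
    apply Rmult_integral in Z1'. destruct Z1' as [Z|Z]; [contradiction|].
    apply Rmult_integral in Z2'. destruct Z2' as [Z'|Z']; [|contradiction].
    apply Rmult_integral in Z'. destruct Hpq as [Hp|Hq].
    - destruct Z' as [Z'|Z']; [contradiction|]. subst q.
      assert (0 < p ^ 2) by (apply pow2_gt_0; auto). nra.
    - destruct Z' as [Z'|Z']; [|contradiction]. subst p.
      assert (0 < q ^ 2) by (apply pow2_gt_0; auto). nra. }
  subst m. split; auto.
  destruct (Req_dec n 0) as [N|N]; auto. exfalso.
  assert (Hq : q = 0) by nra. subst q.
  destruct Hpq as [Hp|Hq]; [|lra].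
  assert (0 < p ^ 2) by (apply pow2_gt_0; auto).
  assert (p * (Phi ^ 2 * p ^ 2) * n = 0) by (rewrite <- e2; ring).
  apply Rmult_integral in H0. destruct H0 as [Z|Z]; [|contradiction].
  apply Rmult_integral in Z. destruct Z as [Z|Z]; [contradiction|]. nra.
Qed.

Ltac etaPQ P Q := repeat match goal with
  | |- context [Derive (fun x0 : R => P x0)] => change (Derive (fun x0 : R => P x0)) with (Derive P)
  | |- context [Derive (fun x0 : R => Q x0)] => change (Derive (fun x0 : R => Q x0)) with (Derive Q)
  end.

Section Lines.
Variables (P Q : R -> R) (dp dq Phi hx l : R).
Hypothesis (HP : is_derive P l dp) (HQ : is_derive Q l dq)
  (HD : Phi ^ 2 * P l ^ 2 + Q l ^ 2 <> 0).

Let D := Phi ^ 2 * P l ^ 2 + Q l ^ 2.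

Lemma dF : is_derive (fun l => Phi / (Phi ^ 2 * P l ^ 2 + Q l ^ 2)) l
  ((- 2 * Phi ^ 3 * P l / D ^ 2) * dp + (- 2 * Phi * Q l / D ^ 2) * dq).
Proof.
  auto_derive.
  - repeat split; auto; eexists; eauto.
  - etaPQ P Q. rewrite (is_derive_unique _ _ _ HP), (is_derive_unique _ _ _ HQ). unfold D. fld.
Qed.

Lemma dG : is_derive (fun l => - 2 * Phi * P l * Q l * (Phi ^ 2 - hx) / (Phi ^ 2 * P l ^ 2 + Q l ^ 2) ^ 2) l
  ((2 * Phi * (hx - Phi ^ 2) * Q l * (Q l ^ 2 - 3 * Phi ^ 2 * P l ^ 2) / D ^ 3) * dp +
   (2 * Phi * (hx - Phi ^ 2) * P l * (Phi ^ 2 * P l ^ 2 - 3 * Q l ^ 2) / D ^ 3) * dq).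
Proof.
  auto_derive.
  - repeat split; auto; eexists; eauto.
  - etaPQ P Q. rewrite (is_derive_unique _ _ _ HP), (is_derive_unique _ _ _ HQ). unfold D. fld.
Qed.

Lemma dH : is_derive (fun l => (Q l ^ 2 - Phi ^ 2 * P l ^ 2) / (Phi ^ 2 * P l ^ 2 + Q l ^ 2) ^ 2) l
  ((- 2 * Phi ^ 2 * P l * (3 * Q l ^ 2 - Phi ^ 2 * P l ^ 2) / D ^ 3) * dp +
   (2 * Q l * (3 * Phi ^ 2 * P l ^ 2 - Q l ^ 2) / D ^ 3) * dq).
Proof.
  auto_derive.
  - repeat split; auto; eexists; eauto.
  - etaPQ P Q. rewrite (is_derive_unique _ _ _ HP), (is_derive_unique _ _ _ HQ). unfold D. fld.
Qed.
End Lines.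

Lemma nz_comb u1 u2 a b : lin_indep u1 u2 -> ~ (a = 0 /\ b = 0) -> exists y, a * u1 y + b * u2 y <> 0.
Proof.
  intros I N. apply Classical_Prop.NNPP. intro H. apply N. apply I. intro x.
  apply Classical_Prop.NNPP. intro H'. apply H. exists x. exact H'.
Qed.

Lemma Dcomb h u1 u2 a b x Phi : (forall x, continuous h x) -> is_sol h u1 -> is_sol h u2 ->
  lin_indep u1 u2 -> ~ (a = 0 /\ b = 0) -> Phi <> 0 ->
  Phi ^ 2 * (a * u1 x + b * u2 x) ^ 2 + (a * Derive u1 x + b * Derive u2 x) ^ 2 <> 0.
Proof.
  intros hc S1 S2 I N HP.
  pose proof (D_pos h (fun t => a * u1 t + b * u2 t) hc (sol_lin h u1 u2 a b S1 S2) (nz_comb u1 u2 a b I N) x Phi HP) as H.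
  rewrite (Derive_lin h u1 u2 a b S1 S2 x) in H. lra.
Qed.

Lemma solves_part h u1 u2 A B : (forall x, continuous h x) -> is_sol h u1 -> is_sol h u2 ->
  lin_indep u1 u2 -> ~ (A = 0 /\ B = 0) -> solves_PDE h (Dom h) (Yfam u1 u2 A B).
Proof.
  intros hc S1 S2 I N x Phi [HP Hh].
  set (u := fun t => A * u1 t + B * u2 t).
  assert (Su : is_sol h u) by (apply sol_lin; auto).
  assert (Nu : Phi ^ 2 * u x ^ 2 + Derive u x ^ 2 <> 0).
  { unfold u. rewrite (Derive_lin h u1 u2 A B S1 S2 x). apply (Dcomb h); auto. lra. }
  assert (E1 := dY h u x Phi Su Nu). assert (E2 := dYP u x Phi Nu).
  split; [eexists; exact E1|split; [eexists; exact E2|]].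
  assert (X1 : pdx (Yfam u1 u2 A B) x Phi = - 2 * Phi * u x * Derive u x * (Phi ^ 2 - h x) / (Phi ^ 2 * u x ^ 2 + Derive u x ^ 2) ^ 2)
    by (apply is_derive_unique; exact E1).
  assert (X2 : pdy (Yfam u1 u2 A B) x Phi = (Derive u x ^ 2 - Phi ^ 2 * u x ^ 2) / (Phi ^ 2 * u x ^ 2 + Derive u x ^ 2) ^ 2)
    by (apply is_derive_unique; exact E2).
  rewrite X1, X2. unfold Yfam. fold u. unfold ctxY.
  assert (h x - Phi ^ 2 <> 0) by lra.
  field. repeat split; auto; try rewrite Rpow_mult_distr; auto; lra.
Qed.

Lemma Lfacts h u1 u2 (a b : R -> R) da db l0 x Phi : (forall x, continuous h x) -> is_sol h u1 -> is_sol h u2 ->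
  lin_indep u1 u2 -> is_derive a l0 da -> is_derive b l0 db -> ~ (a l0 = 0 /\ b l0 = 0) -> Phi <> 0 ->
  let P := fun l => a l * u1 x + b l * u2 x in
  let Q := fun l => a l * Derive u1 x + b l * Derive u2 x in
  let dp := da * u1 x + db * u2 x in
  let dq := da * Derive u1 x + db * Derive u2 x in
  let D := Phi ^ 2 * P l0 ^ 2 + Q l0 ^ 2 in
  is_derive (fun l => Yfam u1 u2 (a l) (b l) x Phi) l0
    ((- 2 * Phi ^ 3 * P l0 / D ^ 2) * dp + (- 2 * Phi * Q l0 / D ^ 2) * dq) /\
  is_derive (fun l => pdx (Yfam u1 u2 (a l) (b l)) x Phi) l0
    ((2 * Phi * (h x - Phi ^ 2) * Q l0 * (Q l0 ^ 2 - 3 * Phi ^ 2 * P l0 ^ 2) / D ^ 3) * dp +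
     (2 * Phi * (h x - Phi ^ 2) * P l0 * (Phi ^ 2 * P l0 ^ 2 - 3 * Q l0 ^ 2) / D ^ 3) * dq) /\
  is_derive (fun l => pdy (Yfam u1 u2 (a l) (b l)) x Phi) l0
    ((- 2 * Phi ^ 2 * P l0 * (3 * Q l0 ^ 2 - Phi ^ 2 * P l0 ^ 2) / D ^ 3) * dp +
     (2 * Q l0 * (3 * Phi ^ 2 * P l0 ^ 2 - Q l0 ^ 2) / D ^ 3) * dq).
Proof.
  intros hc S1 S2 I Ha Hb N HPh P Q dp dq D.
  assert (HP : is_derive P l0 dp).
  { unfold P, dp. auto_derive. repeat split; eexists; eauto.
    etaPQ a b. rewrite (is_derive_unique _ _ _ Ha), (is_derive_unique _ _ _ Hb). ring. }
  assert (HQ : is_derive Q l0 dq).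
  { unfold Q, dq. auto_derive. repeat split; eexists; eauto.
    etaPQ a b. rewrite (is_derive_unique _ _ _ Ha), (is_derive_unique _ _ _ Hb). ring. }
  assert (HD : Phi ^ 2 * P l0 ^ 2 + Q l0 ^ 2 <> 0) by (unfold P, Q; apply (Dcomb h); auto).
  assert (LN : locally l0 (fun l => ~ (a l = 0 /\ b l = 0))).
  { destruct (Req_dec (a l0) 0) as [Z|Z].
    - assert (Zb : b l0 <> 0) by tauto.
      eapply filter_imp; [|exact (loc_pre b (fun y => y <> 0) l0 (ex_derive_continuous b l0 (ex_intro _ db Hb)) (open_neq 0) Zb)].
      intros l H [_ H']. auto.
    - eapply filter_imp; [|exact (loc_pre a (fun y => y <> 0) l0 (ex_derive_continuous a l0 (ex_intro _ da Ha)) (open_neq 0) Z)].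
      intros l H [H' _]. auto. }
  split; [|split].
  - apply (is_derive_ext (fun l => Phi / (Phi ^ 2 * P l ^ 2 + Q l ^ 2))).
    { intro l. unfold Yfam, ctxY, P, Q. rewrite (Derive_lin h u1 u2 (a l) (b l) S1 S2 x). reflexivity. }
    exact (dF P Q dp dq Phi l0 HP HQ HD).
  - apply (is_derive_ext_loc (fun l => - 2 * Phi * P l * Q l * (Phi ^ 2 - h x) / (Phi ^ 2 * P l ^ 2 + Q l ^ 2) ^ 2)).
    { eapply filter_imp; [|exact LN]. intros l Hl.
      set (u := fun t => a l * u1 t + b l * u2 t).
      assert (Su : is_sol h u) by (apply sol_lin; auto).
      assert (Nu : Phi ^ 2 * u x ^ 2 + Derive u x ^ 2 <> 0).
      { unfold u. rewrite (Derive_lin h u1 u2 (a l) (b l) S1 S2 x). apply (Dcomb h); auto. }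
      symmetry. apply is_derive_unique. 
      replace (- 2 * Phi * P l * Q l * (Phi ^ 2 - h x) / (Phi ^ 2 * P l ^ 2 + Q l ^ 2) ^ 2) with
        (- 2 * Phi * u x * Derive u x * (Phi ^ 2 - h x) / (Phi ^ 2 * u x ^ 2 + Derive u x ^ 2) ^ 2).
      exact (dY h u x Phi Su Nu).
      unfold u, P, Q. rewrite (Derive_lin h u1 u2 (a l) (b l) S1 S2 x). reflexivity. }
    replace (2 * Phi * (h x - Phi ^ 2)) with (2 * Phi * (h x - Phi ^ 2)) by reflexivity.
    exact (dG P Q dp dq Phi (h x) l0 HP HQ HD).
  - apply (is_derive_ext_loc (fun l => (Q l ^ 2 - Phi ^ 2 * P l ^ 2) / (Phi ^ 2 * P l ^ 2 + Q l ^ 2) ^ 2)).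
    { eapply filter_imp; [|exact LN]. intros l Hl.
      set (u := fun t => a l * u1 t + b l * u2 t).
      assert (Nu : Phi ^ 2 * u x ^ 2 + Derive u x ^ 2 <> 0).
      { unfold u. rewrite (Derive_lin h u1 u2 (a l) (b l) S1 S2 x). apply (Dcomb h); auto. }
      symmetry. apply is_derive_unique. 
      replace ((Q l ^ 2 - Phi ^ 2 * P l ^ 2) / (Phi ^ 2 * P l ^ 2 + Q l ^ 2) ^ 2) with
        ((Derive u x ^ 2 - Phi ^ 2 * u x ^ 2) / (Phi ^ 2 * u x ^ 2 + Derive u x ^ 2) ^ 2).
      exact (dYP u x Phi Nu).
      unfold u, P, Q. rewrite (Derive_lin h u1 u2 (a l) (b l) S1 S2 x). reflexivity. }
    exact (dH P Q dp dq Phi l0 HP HQ HD).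
Qed.


Lemma Dunique (f : R -> R) (x l : R) : is_derive f x l -> Derive f x = l.
Proof. apply is_derive_unique. Qed.

Lemma rank_part h u1 u2 : (forall x, continuous h x) -> is_sol h u1 -> is_sol h u2 ->
  lin_indep u1 u2 -> complete_integral h (Dom h) (fun A B => ~ (A = 0 /\ B = 0)) (Yfam u1 u2).
Proof.
  intros hc S1 S2 I. split.
  { intros A B HAB. apply solves_part; auto. }
  intros A B x Phi HAB [HP Hh]. cbv zeta.
  assert (HP' : Phi <> 0) by lra.
  assert (Did : forall l0, is_derive (fun l : R => l) l0 1) by (intro; auto_derive; auto).
  assert (Dc : forall c l0, is_derive (fun _ : R => c) l0 0) by (intros; auto_derive; auto).
  destruct (Lfacts h u1 u2 (fun l => l) (fun _ => B) 1 0 A x Phi hc S1 S2 I (Did A) (Dc B A) HAB HP')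
    as [A1 [A2 A3]].
  destruct (Lfacts h u1 u2 (fun _ => A) (fun l => l) 0 1 B x Phi hc S1 S2 I (Dc A B) (Did B) HAB HP')
    as [B1 [B2 B3]].
  split; [eexists; exact A1|]. split; [eexists; exact A2|]. split; [eexists; exact A3|].
  split; [eexists; exact B1|]. split; [eexists; exact B2|]. split; [eexists; exact B3|].
  intros al be E1 E2 E3.
  rewrite (Dunique (fun a => Yfam u1 u2 a B x Phi) A _ A1) in E1.
  rewrite (Dunique (fun b => Yfam u1 u2 A b x Phi) B _ B1) in E1.
  rewrite (Dunique (fun a => pdx (Yfam u1 u2 a B) x Phi) A _ A2) in E2.
  rewrite (Dunique (fun b => pdx (Yfam u1 u2 A b) x Phi) B _ B2) in E2.
  rewrite (Dunique (fun a => pdy (Yfam u1 u2 a B) x Phi) A _ A3) in E3.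
  rewrite (Dunique (fun b => pdy (Yfam u1 u2 A b) x Phi) B _ B3) in E3.
  cbv beta in E1, E2, E3.
  set (p := A * u1 x + B * u2 x) in *.
  set (q := A * Derive u1 x + B * Derive u2 x) in *.
  set (m := al * u1 x + be * u2 x).
  set (n := al * Derive u1 x + be * Derive u2 x).
  assert (Hpq : p <> 0 \/ q <> 0).
  { destruct (Req_dec p 0) as [Z|Z]; auto. right. intro Z'.
    apply (Dcomb h u1 u2 A B x Phi); auto. fold p q. rewrite Z, Z'. ring. }
  destruct (alg_rank p q Phi (h x - Phi ^ 2) m n HP' ltac:(lra) Hpq) as [Hm Hn].
  - rewrite <- E1. unfold m, n. ring.
  - rewrite <- E2. unfold m, n. ring.
  - rewrite <- E3. unfold m, n. ring.
  - assert (Wn := wronsk_nz h u1 u2 hc S1 S2 I x). unfold wronsk in Wn.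
    split.
    + apply (Rmult_eq_reg_r (Derive u1 x * u2 x - u1 x * Derive u2 x)); auto.
      replace (al * (Derive u1 x * u2 x - u1 x * Derive u2 x)) with (u2 x * n - Derive u2 x * m) by (unfold m, n; ring).
      rewrite Hm, Hn. ring.
    + apply (Rmult_eq_reg_r (Derive u1 x * u2 x - u1 x * Derive u2 x)); auto.
      replace (be * (Derive u1 x * u2 x - u1 x * Derive u2 x)) with (Derive u1 x * m - u1 x * n) by (unfold m, n; ring).
      rewrite Hm, Hn. ring.
Qed.

Theorem corollary2p15 (h u1 u2 : R -> R)
  (h_cont : forall x, continuous h x)
  (sol1 : is_sol h u1) (sol2 : is_sol h u2) (indep : lin_indep u1 u2) :
  (* (i) *)
  (forall a b c d : R, a * d - b * c <> 0 ->
     let v1 := fun x => a * u1 x + b * u2 x in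
     let v2 := fun x => c * u1 x + d * u2 x in
     is_sol h v1 /\ is_sol h v2 /\ lin_indep v1 v2 /\
     (forall X0 s : R, (s = 1 \/ s = -1) ->
        local_diffeo (Dom h) (ctxX v1 v2 X0 s) (ctxY v1) /\
        pullback_gH_is_gh h (Dom h) (ctxX v1 v2 X0 s) (ctxY v1))) /\
  (* (ii) *)
  complete_integral h (Dom h) (fun A B => ~ (A = 0 /\ B = 0)) (Yfam u1 u2).
Proof.
  split.
  - intros a b c d Hdet. cbv zeta.
    assert (S1 := sol_lin h u1 u2 a b sol1 sol2).
    assert (S2 := sol_lin h u1 u2 c d sol1 sol2).
    set (Wc := (a * d - b * c) * wronsk u1 u2 0).
    assert (HW : forall y, wronsk (fun x => a * u1 x + b * u2 x) (fun x => c * u1 x + d * u2 x) y = Wc).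
    { intro y. rewrite (wronsk_lin h u1 u2 a b c d sol1 sol2 y). unfold Wc.
      rewrite (wronsk_const h u1 u2 sol1 sol2 y 0). reflexivity. }
    assert (Wn : Wc <> 0).
    { unfold Wc. apply Rmult_integral_contrapositive_currified; auto.
      apply (wronsk_nz h); auto. }
    split; [exact S1|]. split; [exact S2|]. split; [apply indep_lin; auto|].
    intros X0 s Hs. split.
    + apply (local_diffeo_main h _ _ X0 s Wc); auto.
    + apply (pullback h _ _ X0 s Wc); auto.
  - apply rank_part; auto.
Qed.
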